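(* Assume RH and let $T$ be large. For $0<k\le 1/2$, $$\sum_{0<\gamma\le T}\zeta'(\rho)\mathcal{N}(\rho,k-1)\mathcal{N}(\overline{\rho},k) \ll_k \Big(\sum_{0<\gamma\le T}|\zeta'(\rho)|^{2k}\Big)^{1/2}\Big(\sum_{0<\gamma\le T}|\zeta'(\rho)|^2|\mathcal{N}(\rho,k-1)|^2\Big)^{(1-k)/2}\Big(\sum_{0<\gamma\le T}\prod_{i=1}^{\mathcal{J}}\big(|\mathcal{N}_i(\rho,k)|^2+|\mathcal{Q}_i(\rho,k)|^{2r_k}\big)\Big)^{k/2}.$$ For $k>1/2$, $$\sum_{0<\gamma\le T}\zeta'(\rho)\mathcal{N}(\rho,k-1)\mathcal{N}(\overline{\rho},k) \ll_k \Big(\sum_{0<\gamma\le T}|\zeta'(\rho)|^{2k}\Big)^{\frac{1}{2k}}\Big(\sum_{0<\gamma\le T}\prod_{j=1}^{\mathcal{J}}\big(|\mathcal{N}_j(\rho,k)|^2+|\mathcal{Q}_j(\rho,k)|^{2r_k}\big)\Big)^{\frac{2k-1}{2k}}.$$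
   Context: Under RH every nontrivial zero of $\zeta$ is written $\rho=\tfrac12+i\gamma$, $\gamma\in\mathbb{R}$; sums over $0<\gamma\le T$ run over such zeros with multiplicity. Fix real $k>0$, a large number $M$ depending only on $k$, and a large number $T$. Set $\alpha_0=0$, $\alpha_j = 20^{j-1}/(\log\log T)^2$ for $j\ge1$, and $\mathcal{J}=1+\max\{j:\alpha_j\le 10^{-M}\}$. Let $I_j=(T^{\alpha_{j-1}},T^{\alpha_j}]$. Put $E_\ell(x)=\sum_{i=0}^{\lceil \ell\rceil} x^i/i!$. For $1\le j\le \mathcal{J}$, real $\alpha$ and complex $s$ define $\mathcal{P}_j(s)=\sum_{p\in I_j}p^{-s}$ ($p$ prime), $\mathcal{N}_j(s,\alpha)=E_{e^2k\alpha_j^{-3/4}}(\alpha\mathcal{P}_j(s))$, $\mathcal{N}(s,\alpha)=\prod_{j=1}^{\mathcal{J}}\mathcal{N}_j(s,\alpha)$, and $\mathcal{Q}_j(s,k)=\big(64\max(2,k+3/2)\mathcal{P}_j(s)/\lceil e^2k\alpha_j^{-3/4}\rceil\big)^{\lceil e^2k\alpha_j^{-3/4}\rceil}$. Set $r_k=2+\lceil 1/k\rceil$ if $0<k\le1/2$ and $r_k=1+\lceil 2k/(2k-1)\rceil$ if $k>1/2$. *)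

(* Defs.v *)
From Stdlib Require Import Reals Lra Lia ZArith Znumtheory List ClassicalEpsilon.
From Coquelicot Require Import Coquelicot.
Open Scope R_scope.

Definition Cexp (z : C) : C :=
  (exp (Re z) * cos (Im z), exp (Re z) * sin (Im z)).

Definition Crpow (x : R) (s : C) : C := Cexp (Cmult (RtoC (ln x)) s).

Fixpoint Cpown (z : C) (n : nat) : C :=
  match n with O => RtoC 1 | S n' => Cmult z (Cpown z n') end.

Definition csum {A} (l : list A) (f : A -> C) : C :=
  fold_right Cplus (RtoC 0) (map f l).
Definition cprod {A} (l : list A) (f : A -> C) : C :=
  fold_right Cmult (RtoC 1) (map f l).
Definition rsum {A} (l : list A) (f : A -> R) : R :=
  fold_right Rplus 0 (map f l).
Definition rprod {A} (l : list A) (f : A -> R) : R :=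
  fold_right Rmult 1 (map f l).

(* real power x^y, with the convention 0^y = 0 (used only for y > 0) *)
Definition rpow (x y : R) : R := if Rle_dec x 0 then 0 else Rpower x y.

(* ceiling of a real, as a natural number (arguments are positive) *)
Definition ceilN (x : R) : nat := Z.to_nat (1 - up (- x))%Z.

Definition Cderiv (f : C -> C) (z : C) : C :=
  epsilon (inhabits (RtoC 0))
    (fun l => is_derive (K := C_AbsRing) (V := C_NormedModule) f z l).

(* Dirichlet eta function  eta(s) = sum_{n>=1} (-1)^{n-1} n^{-s}  (Re s > 0) *)
Definition eta (s : C) : C :=
  epsilon (inhabits (RtoC 0))
    (fun l => is_series (K := C_AbsRing) (V := C_NormedModule)
       (fun n : nat => Cmult (RtoC ((-1) ^ n)) (Crpow (INR (S n)) (Copp s))) l).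

(* zeta(s) = eta(s) / (1 - 2^{1-s}), the analytic continuation of zeta
   to Re s > 0, s <> 1 (up to removable points on Re s = 1) *)
Definition zeta (s : C) : C :=
  Cdiv (eta s) (Cminus (RtoC 1) (Crpow 2 (Cminus (RtoC 1) s))).

Definition zeta' (s : C) : C := Cderiv zeta s.

Definition RH : Prop :=
  forall s : C, 0 < Re s < 1 -> zeta s = RtoC 0 -> Re s = 1 / 2.

Definition zero_order (f : C -> C) (z : C) (m : nat) : Prop :=
  exists c : C, c <> RtoC 0 /\
    filterlim (fun s => Cdiv (f s) (Cpown (Cminus s z) m)) (locally' z) (locally c).

Definition rho (g : R) : C := (1 / 2, g).

(* l lists each ordinate gamma in (0,T] of a zero 1/2+i gamma exactly once,
   together with its multiplicity *)
Definition zeros_list (T : R) (l : list (R * nat)) : Prop :=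
  NoDup (map fst l) /\
  (forall g m, In (g, m) l ->
     0 < g <= T /\ zeta (rho g) = RtoC 0 /\ zero_order zeta (rho g) m) /\
  (forall g, 0 < g <= T -> zeta (rho g) = RtoC 0 -> exists m, In (g, m) l).

Definition zsumC (l : list (R * nat)) (F : C -> C) : C :=
  csum l (fun p => Cmult (RtoC (INR (snd p))) (F (rho (fst p)))).
Definition zsumR (l : list (R * nat)) (F : C -> R) : R :=
  rsum l (fun p => INR (snd p) * F (rho (fst p))).

Definition alpha (T : R) (j : nat) : R :=
  match j with O => 0 | S j' => 20 ^ j' / (ln (ln T)) ^ 2 end.

Definition is_calJ (T M : R) (J : nat) : Prop :=
  (1 <= J)%nat /\ alpha T (J - 1) <= Rpower 10 (- M) /\
  (forall j, alpha T j <= Rpower 10 (- M) -> (j <= J - 1)%nat).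

(* P_j(s) = sum_{p prime, T^{alpha_{j-1}} < p <= T^{alpha_j}} p^{-s} *)
Definition Pj (T : R) (j : nat) (s : C) : C :=
  csum (seq 0 (S (Z.to_nat (up (Rpower T (alpha T j))))))
    (fun n => if prime_dec (Z.of_nat n) then
                if Rlt_dec (Rpower T (alpha T (j - 1))) (INR n) then
                  if Rle_dec (INR n) (Rpower T (alpha T j)) then
                    Crpow (INR n) (Copp s)
                  else RtoC 0
                else RtoC 0
              else RtoC 0).

Definition Eexp (l : R) (x : C) : C :=
  csum (seq 0 (S (ceilN l))) (fun i => Cdiv (Cpown x i) (RtoC (INR (fact i)))).

Definition ellj (k T : R) (j : nat) : R := exp 2 * k * Rpower (alpha T j) (- (3 / 4)).

Definition Nj (k T : R) (j : nat) (s : C) (a : R) : C :=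
  Eexp (ellj k T j) (Cmult (RtoC a) (Pj T j s)).

Definition Nmol (k T : R) (J : nat) (s : C) (a : R) : C :=
  cprod (seq 1 J) (fun j => Nj k T j s a).

Definition Qj (k T : R) (j : nat) (s : C) : C :=
  Cpown (Cdiv (Cmult (RtoC (64 * Rmax 2 (k + 3 / 2))) (Pj T j s))
              (RtoC (INR (ceilN (ellj k T j)))))
        (ceilN (ellj k T j)).

Definition r_k (k : R) : nat :=
  if Rle_dec k (1 / 2) then (2 + ceilN (1 / k))%nat
  else (1 + ceilN (2 * k / (2 * k - 1)))%nat.

Definition prodNQ (k T : R) (J : nat) (s : C) : R :=
  rprod (seq 1 J) (fun j =>
    Cmod (Nj k T j s k) ^ 2 + Cmod (Qj k T j s) ^ (2 * r_k k)).

(* Main.v *)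
Require Import Defs.
From Stdlib Require Import Reals List Lra Lia Psatz Arith ZArith Znumtheory ClassicalEpsilon.
From Coquelicot Require Import Coquelicot.
Open Scope R_scope.

Lemma csum_app {A} (l1 l2 : list A) f : csum (l1 ++ l2) f = Cplus (csum l1 f) (csum l2 f).
Proof.
  induction l1 as [|x l1 IH]; unfold csum in *; simpl.
  - ring.
  - rewrite IH. ring.
Qed.

Lemma csum_S (n : nat) f : csum (seq 0 (S n)) f = Cplus (csum (seq 0 n) f) (f n).
Proof. rewrite seq_S, csum_app. unfold csum; simpl. ring. Qed.

Definition Esum (n : nat) (w : C) : C :=
  csum (seq 0 (S n)) (fun i => Cdiv (Cpown w i) (RtoC (INR (fact i)))).

Lemma Eexp_Esum l x : Eexp l x = Esum (ceilN l) x.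
Proof. reflexivity. Qed.

Lemma Cdiv_R_fst z r : r <> 0 -> fst (Cdiv z (RtoC r)) = fst z / r.
Proof. intros H. destruct z as [a b]. unfold Cdiv, Cinv, Cmult, RtoC; simpl. field. auto. Qed.
Lemma Cdiv_R_snd z r : r <> 0 -> snd (Cdiv z (RtoC r)) = snd z / r.
Proof. intros H. destruct z as [a b]. unfold Cdiv, Cinv, Cmult, RtoC; simpl. field. auto. Qed.

Lemma fst_Cplus a b : fst (Cplus a b) = fst a + fst b. Proof. reflexivity. Qed.
Lemma snd_Cplus a b : snd (Cplus a b) = snd a + snd b. Proof. reflexivity. Qed.
Lemma fact_pos n : 0 < INR (fact n). Proof. apply lt_0_INR, lt_O_fact. Qed.
Lemma fact_nz n : INR (fact n) <> 0. Proof. apply Rgt_not_eq, fact_pos. Qed.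

Lemma Esum_fst n w : fst (Esum n w) = sum_f_R0 (fun i => fst (Cpown w i) / INR (fact i)) n.
Proof.
  induction n as [|n IH].
  - unfold Esum, csum; simpl. field.
  - unfold Esum in *. rewrite csum_S, fst_Cplus, IH, Cdiv_R_fst by apply fact_nz. reflexivity.
Qed.
Lemma Esum_snd n w : snd (Esum n w) = sum_f_R0 (fun i => snd (Cpown w i) / INR (fact i)) n.
Proof.
  induction n as [|n IH].
  - unfold Esum, csum; simpl. field.
  - unfold Esum in *. rewrite csum_S, snd_Cplus, IH, Cdiv_R_snd by apply fact_nz. reflexivity.
Qed.

Section Deriv.
Variable w : C.
Let p := fst w.
Let q := snd w.
Definition aa i := fst (Cpown w i).
Definition bb i := snd (Cpown w i).
Lemma aa_S i : aa (S i) = p * aa i - q * bb i. Proof. reflexivity. Qed.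
Lemma bb_S i : bb (S i) = p * bb i + q * aa i. Proof. unfold bb, aa; simpl. unfold p, q. ring. Qed.
Definition FF n t := sum_f_R0 (fun i => t ^ i * aa i / INR (fact i)) n.
Definition GG n t := sum_f_R0 (fun i => t ^ i * bb i / INR (fact i)) n.

Lemma is_derive_eq (f : R -> R) x l l' : is_derive f x l -> l = l' -> is_derive f x l'.
Proof. intros H ->; exact H. Qed.

Lemma derive_mono (c : R) (m : nat) t :
  is_derive (fun t => t ^ m * c) t (INR m * t ^ (pred m) * c).
Proof. auto_derive; auto; ring. Qed.

Ltac req := match goal with |- @eq _ ?a ?b => change (@eq R a b) end.

Lemma derive_cst (c t : R) : is_derive (fun _ => c) t 0.
Proof. auto_derive; auto. Qed.

Lemma FG_derive n t :
  is_derive (FF n) t (p * FF n t - q * GG n t - t ^ n * aa (S n) / INR (fact n)) /\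
  is_derive (GG n) t (p * GG n t + q * FF n t - t ^ n * bb (S n) / INR (fact n)).
Proof.
  induction n as [|n [IHF IHG]].
  - unfold FF, GG; simpl. split.
    + apply (is_derive_eq _ _ 0). 
      * apply derive_cst.
      * rewrite (aa_S 0). req. field.
    + apply (is_derive_eq _ _ 0). 
      * apply derive_cst.
      * rewrite (bb_S 0). req. field.
  - split.
    + 
      apply (is_derive_eq _ _ ((p * FF n t - q * GG n t - t ^ n * aa (S n) / INR (fact n))
              + INR (S n) * t ^ n * (aa (S n) / INR (fact (S n))))).
      * apply (is_derive_ext (fun t => FF n t + t ^ (S n) * (aa (S n) / INR (fact (S n))))).
        { intros; unfold FF; cbn [sum_f_R0]; req; unfold Rdiv; ring. }
        apply (is_derive_plus (FF n) (fun t => t ^ (S n) * (aa (S n) / INR (fact (S n))))).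
        exact IHF. apply derive_mono.
      * unfold FF, GG; cbn [sum_f_R0]. rewrite (aa_S (S n)), bb_S.
        rewrite fact_simpl, mult_INR. simpl pow. req. field. split; [apply fact_nz|apply not_0_INR; lia].
    + 
      apply (is_derive_eq _ _ ((p * GG n t + q * FF n t - t ^ n * bb (S n) / INR (fact n))
              + INR (S n) * t ^ n * (bb (S n) / INR (fact (S n))))).
      * apply (is_derive_ext (fun t => GG n t + t ^ (S n) * (bb (S n) / INR (fact (S n))))).
        { intros; unfold GG; cbn [sum_f_R0]; req; unfold Rdiv; ring. }
        apply (is_derive_plus (GG n) (fun t => t ^ (S n) * (bb (S n) / INR (fact (S n))))).
        exact IHG. apply derive_mono.
      * unfold FF, GG; cbn [sum_f_R0]. rewrite (bb_S (S n)), aa_S.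
        rewrite fact_simpl, mult_INR. simpl pow. req. field. split; [apply fact_nz|apply not_0_INR; lia].
Qed.

Lemma der_mult (f g : R -> R) x df dg :
  is_derive f x df -> is_derive g x dg -> is_derive (fun t => f t * g t) x (df * g x + f x * dg).
Proof. intros Hf Hg. apply (is_derive_mult f g x df dg Hf Hg). intros; apply Rmult_comm. Qed.
Lemma der_plus (f g : R -> R) x df dg :
  is_derive f x df -> is_derive g x dg -> is_derive (fun t => f t + g t) x (df + dg).
Proof. intros Hf Hg. apply (is_derive_plus f g x df dg Hf Hg). Qed.
Lemma der_minus (f g : R -> R) x df dg :
  is_derive f x df -> is_derive g x dg -> is_derive (fun t => f t - g t) x (df - dg).
Proof. intros Hf Hg. apply (is_derive_minus f g x df dg Hf Hg). Qed.

Definition uu n t := exp (-(t * p)) * (FF n t * cos (t * q) + GG n t * sin (t * q)).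
Definition vv n t := exp (-(t * p)) * (GG n t * cos (t * q) - FF n t * sin (t * q)).

Lemma uu_derive n t : is_derive (uu n) t
  (- exp (-(t * p)) * (t ^ n / INR (fact n)) * (aa (S n) * cos (t * q) + bb (S n) * sin (t * q))).
Proof.
  destruct (FG_derive n t) as [HF HG].
  assert (HE : is_derive (fun t => exp (-(t * p))) t (- p * exp (-(t * p)))) by (auto_derive; auto; ring).
  assert (HC : is_derive (fun t => cos (t * q)) t (- q * sin (t * q))) by (auto_derive; auto; ring).
  assert (HS : is_derive (fun t => sin (t * q)) t (q * cos (t * q))) by (auto_derive; auto; ring).
  eapply is_derive_eq.
  - unfold uu. apply der_mult. exact HE. apply der_plus; apply der_mult; eauto.
  - req. cbv beta. field. apply fact_nz.
Qed.

Lemma vv_derive n t : is_derive (vv n) t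
  (- exp (-(t * p)) * (t ^ n / INR (fact n)) * (bb (S n) * cos (t * q) - aa (S n) * sin (t * q))).
Proof.
  destruct (FG_derive n t) as [HF HG].
  assert (HE : is_derive (fun t => exp (-(t * p))) t (- p * exp (-(t * p)))) by (auto_derive; auto; ring).
  assert (HC : is_derive (fun t => cos (t * q)) t (- q * sin (t * q))) by (auto_derive; auto; ring).
  assert (HS : is_derive (fun t => sin (t * q)) t (q * cos (t * q))) by (auto_derive; auto; ring).
  eapply is_derive_eq.
  - unfold vv. apply der_mult. exact HE. apply der_minus; apply der_mult; eauto.
  - req. cbv beta. field. apply fact_nz.
Qed.

Lemma FF0 n : FF n 0 = 1.
Proof. induction n; unfold FF in *; cbn [sum_f_R0]. unfold aa; simpl; field. rewrite IHn. simpl pow. unfold Rdiv. ring. Qed.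
Lemma GG0 n : GG n 0 = 0.
Proof. induction n; unfold GG in *; cbn [sum_f_R0]. unfold bb; simpl; field. rewrite IHn. simpl pow. unfold Rdiv. ring. Qed.
End Deriv.

Lemma Cmod_Cpown w n : Cmod (Cpown w n) = Cmod w ^ n.
Proof. induction n; simpl. apply Cmod_1. rewrite Cmod_mult, IHn. ring. Qed.

Lemma abs_fst_le w : Rabs (fst w) <= Cmod w.
Proof. eapply Rle_trans; [apply Rmax_l|apply Rmax_Cmod]. Qed.
Lemma abs_snd_le w : Rabs (snd w) <= Cmod w.
Proof. eapply Rle_trans; [apply Rmax_r|apply Rmax_Cmod]. Qed.

Lemma uv_bound w n :
  Rabs (uu w n 1 - 1) <= 2 * exp (Cmod w) * Cmod w ^ (S n) / INR (fact n) /\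
  Rabs (vv w n 1) <= 2 * exp (Cmod w) * Cmod w ^ (S n) / INR (fact n).
Proof.
  set (p := fst w). set (q := snd w).
  assert (Hp : Rabs p <= Cmod w) by apply abs_fst_le.
  assert (Ha : Rabs (aa w (S n)) <= Cmod w ^ S n) by (rewrite <- Cmod_Cpown; apply abs_fst_le).
  assert (Hb : Rabs (bb w (S n)) <= Cmod w ^ S n) by (rewrite <- Cmod_Cpown; apply abs_snd_le).
  assert (Hf := fact_pos n).
  assert (Key : forall c, Rabs c <= 1 -> forall X, Rabs X <= 2 * Cmod w ^ S n ->
      Rabs (- exp (-(c * p)) * (c ^ n / INR (fact n)) * X) <= 2 * exp (Cmod w) * Cmod w ^ (S n) / INR (fact n)).
  { intros c Hc X HX.
    rewrite !Rabs_mult, Rabs_Ropp, Rabs_pos_eq by (left; apply exp_pos).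
    unfold Rdiv. rewrite Rabs_mult, (Rabs_pos_eq (/ _)) by (left; apply Rinv_0_lt_compat; auto).
    rewrite <- RPow_abs.
    assert (exp (-(c*p)) <= exp (Cmod w)).
    { apply exp_le_3 || idtac. destruct (Req_dec (-(c*p)) (Cmod w)) as [E|E]. rewrite E; lra.
      left; apply exp_increasing.
      assert (Rabs (c*p) <= Cmod w). { rewrite Rabs_mult. assert (0 <= Rabs p) by apply Rabs_pos.
        assert (0 <= Rabs c) by apply Rabs_pos. nra. }
      apply Rabs_le_between in H. lra. }
    assert (Rabs c ^ n <= 1) by (apply pow_le_1 || (rewrite <- (pow1 n); apply pow_incr; split; [apply Rabs_pos|lra])).
    assert (0 <= Rabs c ^ n) by (apply pow_le, Rabs_pos).
    assert (0 < / INR (fact n)) by (apply Rinv_0_lt_compat; auto).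
    assert (0 <= Rabs X) by apply Rabs_pos.
    assert (0 < exp (-(c*p))) by apply exp_pos.
    assert (0 <= Cmod w ^ S n) by (apply pow_le, Cmod_ge_0).
    assert (exp (-(c*p)) * Rabs c ^ n <= exp (Cmod w)) by nra.
    assert (exp (-(c*p)) * Rabs c ^ n * Rabs X <= exp (Cmod w) * (2 * Cmod w ^ S n)).
    { apply Rmult_le_compat; try nra. }
    nra. }
  split.
  - destruct (MVT_cor4 (uu w n) (fun t => - exp (-(t * p)) * (t ^ n / INR (fact n)) * (aa w (S n) * cos (t * q) + bb w (S n) * sin (t * q))) 0 1)
      with (b := 1) as [c [Hc1 Hc2]].
    + intros; apply uu_derive.
    + rewrite Rminus_0_r, Rabs_R1; lra.
    + replace (uu w n 0) with 1 in Hc1.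
      2:{ unfold uu. rewrite FF0, GG0, !Rmult_0_l, Ropp_0, exp_0, cos_0. ring. }
      rewrite Hc1, Rminus_0_r, Rmult_1_r. rewrite Rminus_0_r in Hc2. rewrite Rminus_0_r in Hc2 at 1. rewrite Rabs_R1 in Hc2.
      apply Key; auto.
      eapply Rle_trans. apply Rabs_triang. rewrite !Rabs_mult.
      assert (Rabs (cos (c*q)) <= 1) by (apply Rabs_le; apply COS_bound).
      assert (Rabs (sin (c*q)) <= 1) by (apply Rabs_le; apply SIN_bound).
      assert (0 <= Rabs (aa w (S n))) by apply Rabs_pos.
      assert (0 <= Rabs (bb w (S n))) by apply Rabs_pos.
      nra.
  - destruct (MVT_cor4 (vv w n) (fun t => - exp (-(t * p)) * (t ^ n / INR (fact n)) * (bb w (S n) * cos (t * q) - aa w (S n) * sin (t * q))) 0 1)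
      with (b := 1) as [c [Hc1 Hc2]].
    + intros; apply vv_derive.
    + rewrite Rminus_0_r, Rabs_R1; lra.
    + replace (vv w n 0) with 0 in Hc1.
      2:{ unfold vv. rewrite FF0, GG0, !Rmult_0_l, Ropp_0, exp_0, sin_0. ring. }
      replace (vv w n 1) with (vv w n 1 - 0) by ring.
      rewrite Hc1, Rminus_0_r, Rmult_1_r. rewrite Rminus_0_r in Hc2. rewrite Rminus_0_r in Hc2 at 1. rewrite Rabs_R1 in Hc2.
      apply Key; auto.
      eapply Rle_trans. apply Rabs_triang. rewrite Rabs_Ropp, !Rabs_mult.
      assert (Rabs (cos (c*q)) <= 1) by (apply Rabs_le; apply COS_bound).
      assert (Rabs (sin (c*q)) <= 1) by (apply Rabs_le; apply SIN_bound).
      assert (0 <= Rabs (aa w (S n))) by apply Rabs_pos.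
      assert (0 <= Rabs (bb w (S n))) by apply Rabs_pos.
      nra.
Qed.

Lemma Esum_Cmod2 n w : Cmod (Esum n w) ^ 2 = FF w n 1 ^ 2 + GG w n 1 ^ 2.
Proof.
  rewrite Cmod2_alt. unfold Re, Im. rewrite Esum_fst, Esum_snd. unfold FF, GG.
  f_equal; f_equal; apply sum_eq; intros; cbv beta; rewrite pow1, Rmult_1_l; reflexivity.
Qed.

Lemma Esum_bounds n w :
  exp (fst w) * (1 - 2 * exp (Cmod w) * Cmod w ^ (S n) / INR (fact n)) <= Cmod (Esum n w) <=
  exp (fst w) * (1 + 2 * (2 * exp (Cmod w) * Cmod w ^ (S n) / INR (fact n))).
Proof.
  destruct (uv_bound w n) as [Hu Hv].
  set (d := 2 * exp (Cmod w) * Cmod w ^ (S n) / INR (fact n)) in *.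
  assert (Hd : 0 <= d).
  { unfold d. apply Rmult_le_pos. apply Rmult_le_pos. apply Rmult_le_pos. lra. left; apply exp_pos.
    apply pow_le, Cmod_ge_0. left; apply Rinv_0_lt_compat, fact_pos. }
  set (E := Cmod (Esum n w)).
  assert (HE0 : 0 <= E) by apply Cmod_ge_0.
  assert (Hid : (uu w n 1) ^ 2 + (vv w n 1) ^ 2 = (exp (- fst w) * E) ^ 2).
  { unfold E. rewrite Rpow_mult_distr, Esum_Cmod2. unfold uu, vv. rewrite !Rmult_1_l.
    assert (Hsc := sin2_cos2 (snd w)). unfold Rsqr in Hsc.
    replace ((FF w n 1 * cos (snd w) + GG w n 1 * sin (snd w))) with (FF w n 1 * cos (snd w) + GG w n 1 * sin (snd w)) by reflexivity.
    transitivity (exp (- fst w) ^ 2 * (FF w n 1 ^ 2 + GG w n 1 ^ 2) * (sin (snd w) * sin (snd w) + cos (snd w) * cos (snd w))).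
    ring. rewrite Hsc. ring. }
  assert (Hx : exp (fst w) * exp (- fst w) = 1) by (rewrite <- exp_plus; replace (fst w + - fst w) with 0 by ring; apply exp_0).
  assert (Hpos : 0 < exp (fst w)) by apply exp_pos.
  assert (Hpos' : 0 < exp (- fst w)) by apply exp_pos.
  set (X := exp (- fst w) * E) in *.
  assert (HX0 : 0 <= X) by (unfold X; nra).
  assert (HEX : E = exp (fst w) * X) by (unfold X; rewrite <- Rmult_assoc, Hx; ring).
  apply Rabs_le_between in Hu. apply Rabs_le_between in Hv.
  split; rewrite HEX; apply Rmult_le_compat_l; try lra.
  - destruct (Rle_dec (1 - d) 0). lra. nra.
  - nra.
Qed.

Lemma exp_pow_n x n : exp x ^ n = exp (INR n * x).
Proof.
  induction n. simpl. rewrite Rmult_0_l, exp_0. reflexivity.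
  rewrite S_INR. simpl pow. rewrite IHn, <- exp_plus. f_equal. ring.
Qed.

Lemma sum_ge_last (An : nat -> R) N : (forall i, 0 <= An i) -> An N <= sum_f_R0 An N.
Proof.
  intros H. destruct N. simpl. lra. simpl. assert (0 <= sum_f_R0 An N).
  { apply cond_pos_sum. auto. } lra.
Qed.

Lemma fact_lower n : INR n ^ n / INR (fact n) <= exp (INR n).
Proof.
  eapply Rle_trans. 2: apply (exp_ge_taylor (INR n) n), pos_INR.
  apply (sum_ge_last (fun k => INR n ^ k / INR (fact k)) n).
  intros i. apply Rmult_le_pos. apply pow_le, pos_INR. left; apply Rinv_0_lt_compat, fact_pos.
Qed.

Lemma exp1_ge2 : 2 <= exp 1. Proof. generalize (exp_ineq1_le 1). lra. Qed.
Lemma exp2_ge4 : 4 <= exp 2.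
Proof. replace 2 with (1+1) by ring. rewrite exp_plus. generalize exp1_ge2. nra. Qed.

Lemma exp_mono x y : x <= y -> exp x <= exp y.
Proof. intros H. destruct (Rle_lt_or_eq_dec _ _ H) as [H'|H']. left; apply exp_increasing; auto. rewrite H'; lra. Qed.

Lemma delta_small n w : Cmod w <= INR n / exp 2 ->
  2 * exp (Cmod w) * Cmod w ^ (S n) / INR (fact n) <= exp (- (INR n / 4)).
Proof.
  intros Hw.
  set (m := INR n). set (L := m / exp 2).
  assert (HwL : Cmod w <= L) by exact Hw.
  assert (Hm : 0 <= m) by apply pos_INR.
  assert (He2 := exp2_ge4).
  assert (HL0 : 0 <= L) by (unfold L; apply Rmult_le_pos; [lra| left; apply Rinv_0_lt_compat; lra]).
  assert (HL4 : L <= m / 4).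
  { unfold L. apply Rmult_le_compat_l. lra. apply Rinv_le_contravar; lra. }
  assert (Hf := fact_pos n).
  assert (Hw0 : 0 <= Cmod w) by apply Cmod_ge_0.
  assert (H1 : 2 * exp (Cmod w) * Cmod w ^ (S n) / INR (fact n) <= 2 * exp L * L * (L ^ n / INR (fact n))).
  { simpl pow. unfold Rdiv.
    assert (exp (Cmod w) <= exp L) by (apply exp_mono; lra).
    assert (Cmod w ^ n <= L ^ n) by (apply pow_incr; split; lra).
    assert (0 < / INR (fact n)) by (apply Rinv_0_lt_compat; auto).
    assert (0 <= Cmod w ^ n) by (apply pow_le; lra).
    assert (0 < exp (Cmod w)) by apply exp_pos.
    assert (0 <= exp (Cmod w) * (Cmod w * Cmod w ^ n)) by (apply Rmult_le_pos; nra).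
    assert (exp (Cmod w) * (Cmod w * Cmod w ^ n) <= exp L * (L * L ^ n)).
    { apply Rmult_le_compat; try nra. }
    nra. }
  assert (H2 : L ^ n / INR (fact n) <= exp (- m)).
  { unfold L. unfold Rdiv. rewrite Rpow_mult_distr, pow_inv.
    replace (exp 2 ^ n) with (exp m * exp m).
    2:{ rewrite exp_pow_n, <- exp_plus. f_equal. unfold m; ring. }
    assert (Hfl := fact_lower n). fold m in Hfl. unfold Rdiv in Hfl.
    rewrite exp_Ropp.
    assert (0 < exp m) by apply exp_pos.
    replace (m ^ n * / (exp m * exp m) * / INR (fact n)) with ((m ^ n * / INR (fact n)) * / exp m / exp m) by (field; lra).
    assert (Hi : exp m * / exp m = 1) by (field; lra).
    assert (0 < / exp m) by (apply Rinv_0_lt_compat; lra).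
    set (A := m ^ n * / INR (fact n)) in *. set (ie := / exp m) in *.
    assert (0 <= (exp m - A) * ie * ie) by (apply Rmult_le_pos; [apply Rmult_le_pos|]; lra).
    unfold Rdiv. change (/ exp m) with ie. nra. }
  assert (H3 : exp L <= exp (m / 4)) by (apply exp_mono; lra).
  assert (H4 : m / 2 <= exp (m / 2)) by (generalize (exp_ineq1_le (m/2)); lra).
  assert (Hid : exp (m / 2) * exp (m / 4) * exp (- m) = exp (- (m / 4))).
  { rewrite <- !exp_plus. f_equal. field. }
  assert (0 <= L ^ n / INR (fact n)) by (apply Rmult_le_pos; [apply pow_le; lra | left; apply Rinv_0_lt_compat; auto]).
  assert (0 < exp L) by apply exp_pos.
  assert (0 < exp (-m)) by apply exp_pos.
  assert (0 < exp (m/4)) by apply exp_pos.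
  assert (2 * exp L * L * (L ^ n / INR (fact n)) <= 2 * exp (m/4) * (m/4) * exp (-m)).
  { apply Rmult_le_compat; try nra. }
  rewrite <- Hid.
  assert (0 < exp (m/4) * exp (-m)) by (apply Rmult_lt_0_compat; lra).
  assert (m / 2 * (exp (m/4) * exp (-m)) <= exp (m/2) * (exp (m/4) * exp (-m))) by (apply Rmult_le_compat_r; lra).
  replace (2 * exp (m/4) * (m/4) * exp (-m)) with (m / 2 * (exp (m/4) * exp (-m))) in * by field.
  rewrite Rmult_assoc. lra.
Qed.

Lemma Cmod_div_R z r : r <> 0 -> Cmod (Cdiv z (RtoC r)) = Cmod z / Rabs r.
Proof.
  intros H. rewrite Cmod_div. rewrite Cmod_R. reflexivity.
  intro E. apply H. injection E. auto.
Qed.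

Lemma Esum_triangle n w : Cmod (Esum n w) <= sum_f_R0 (fun i => Cmod w ^ i / INR (fact i)) n.
Proof.
  induction n.
  - unfold Esum. rewrite csum_S. unfold csum at 1. simpl map. simpl fold_right. rewrite Cplus_0_l.
    rewrite (Cmod_div_R _ _ (fact_nz 0)). rewrite Cmod_Cpown, Rabs_pos_eq by (left; apply fact_pos). simpl; lra.
  - unfold Esum in *. rewrite csum_S. cbn [sum_f_R0].
    eapply Rle_trans. apply Cmod_triangle. apply Rplus_le_compat. exact IHn.
    rewrite Cmod_div_R by apply fact_nz. rewrite Cmod_Cpown, Rabs_pos_eq by (left; apply fact_pos). lra.
Qed.

Lemma Esum_large n w : (1 <= n)%nat ->
  Cmod (Esum n w) <= exp (INR n) * Rmax 1 (Cmod w / INR n) ^ n.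
Proof.
  intros Hn.
  set (M := Rmax 1 (Cmod w / INR n)).
  assert (HM1 : 1 <= M) by apply Rmax_l.
  assert (Hnp : 0 < INR n) by (apply lt_0_INR; lia).
  assert (Hw0 := Cmod_ge_0 w).
  assert (HwM : Cmod w <= M * INR n).
  { assert (Cmod w / INR n <= M) by apply Rmax_r.
    replace (Cmod w) with (Cmod w / INR n * INR n) by (field; lra). nra. }
  eapply Rle_trans. apply Esum_triangle.
  eapply Rle_trans with (sum_f_R0 (fun i => (INR n ^ i / INR (fact i)) * M ^ n) n).
  - apply sum_Rle. intros i Hi.
    assert (Cmod w ^ i <= M ^ n * INR n ^ i).
    { eapply Rle_trans. apply pow_incr. split. exact Hw0. exact HwM.
      rewrite Rpow_mult_distr. apply Rmult_le_compat_r. apply pow_le; lra.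
      apply Rle_pow; auto. }
    assert (Hf := fact_pos i).
    unfold Rdiv. replace (INR n ^ i * / INR (fact i) * M ^ n) with (M ^ n * INR n ^ i * / INR (fact i)) by ring.
    apply Rmult_le_compat_r. left; apply Rinv_0_lt_compat; auto. auto.
  - rewrite <- scal_sum. rewrite Rmult_comm. apply Rmult_le_compat_r. apply pow_le; lra.
    apply exp_ge_taylor. lra.
Qed.

Lemma rpow_pos x y : 0 < x -> rpow x y = Rpower x y.
Proof. intros H. unfold rpow. destruct (Rle_dec x 0); [lra|auto]. Qed.
Lemma rpow_nonpos x y : x <= 0 -> rpow x y = 0.
Proof. intros H. unfold rpow. destruct (Rle_dec x 0); [auto|lra]. Qed.
Lemma rpow_ge0 x y : 0 <= rpow x y.
Proof. unfold rpow. destruct (Rle_dec x 0). lra. left; apply exp_pos. Qed.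
Lemma rpow_gt0 x y : 0 < x -> 0 < rpow x y.
Proof. intros H. rewrite rpow_pos by auto. apply exp_pos. Qed.
Lemma rpow_mult x y z : 0 <= x -> 0 <= y -> rpow (x * y) z = rpow x z * rpow y z.
Proof.
  intros Hx Hy. destruct (Rle_lt_or_eq_dec _ _ Hx) as [Hx'|Hx']; [|subst; rewrite Rmult_0_l, rpow_nonpos by lra; ring].
  destruct (Rle_lt_or_eq_dec _ _ Hy) as [Hy'|Hy']; [|subst; rewrite Rmult_0_r, !(rpow_nonpos 0) by lra; ring].
  rewrite !rpow_pos by nra. symmetry. apply Rpower_mult_distr; auto.
Qed.
Lemma rpow_rpow x y z : 0 <= x -> rpow (rpow x y) z = rpow x (y * z).
Proof.
  intros Hx. destruct (Rle_lt_or_eq_dec _ _ Hx) as [Hx'|Hx']; [|subst; rewrite (rpow_nonpos 0 y), !rpow_nonpos by lra; auto].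
  rewrite (rpow_pos x y) by auto. rewrite rpow_pos by (apply exp_pos). rewrite rpow_pos by auto. apply Rpower_mult.
Qed.
Lemma rpow_1 x : 0 <= x -> rpow x 1 = x.
Proof.
  intros Hx. destruct (Rle_lt_or_eq_dec _ _ Hx) as [Hx'|Hx']; [|subst; rewrite !rpow_nonpos by lra; auto].
  rewrite rpow_pos by auto. apply Rpower_1; auto.
Qed.
Lemma rpow_le_base x y z : 0 <= x <= y -> 0 <= z -> rpow x z <= rpow y z.
Proof.
  intros [Hx Hxy] Hz. destruct (Rle_lt_or_eq_dec _ _ Hx) as [Hx'|Hx']; [|subst; rewrite rpow_nonpos by lra; apply rpow_ge0].
  rewrite !rpow_pos by lra. apply Rle_Rpower_l; auto.
Qed.
Lemma rpow_exp a y : rpow (exp a) y = exp (y * a).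
Proof. rewrite rpow_pos by apply exp_pos. unfold Rpower. rewrite ln_exp. reflexivity. Qed.
Lemma rpow_pow x n : 0 <= x -> (1 <= n)%nat -> rpow x (INR n) = x ^ n.
Proof.
  intros Hx Hn. destruct (Rle_lt_or_eq_dec _ _ Hx) as [Hx'|Hx'].
  - rewrite rpow_pos by auto. apply Rpower_pow; auto.
  - subst. rewrite rpow_nonpos by lra. destruct n. lia. simpl; ring.
Qed.
Lemma rpow_plus x a b : 0 < x -> rpow x (a + b) = rpow x a * rpow x b.
Proof. intros H. rewrite !rpow_pos by auto. apply Rpower_plus. Qed.
Lemma rpow_le_exp x a b : 1 <= x -> a <= b -> rpow x a <= rpow x b.
Proof. intros H Hab. rewrite !rpow_pos by lra. apply Rle_Rpower; auto. Qed.
Lemma rpow_ge_self y t : 0 < y <= 1 -> 0 <= t <= 1 -> y <= rpow y t.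
Proof.
  intros Hy Ht. rewrite rpow_pos by lra. unfold Rpower.
  replace y with (exp (ln y)) at 1 by (apply exp_ln; lra).
  apply exp_mono. assert (ln y <= 0).
  { destruct (Rle_lt_or_eq_dec _ _ (proj2 Hy)). left; rewrite <- ln_1; apply ln_increasing; lra. subst; rewrite ln_1; lra. }
  nra.
Qed.

Lemma ceilN_ge x : x <= INR (ceilN x).
Proof.
  unfold ceilN. destruct (archimed (- x)) as [H1 H2].
  assert (Hz : x <= IZR (1 - up (- x))) by (rewrite minus_IZR; lra).
  destruct (Z_le_gt_dec 0 (1 - up (-x))) as [Hp|Hn].
  - rewrite INR_IZR_INZ, Z2Nat.id by auto. auto.
  - replace (Z.to_nat (1 - up (- x))) with 0%nat by lia. simpl. assert (Hn2 : (1 - up (- x) < 0)%Z) by lia. apply IZR_lt in Hn2. lra.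
Qed.
Lemma ceilN_pos x : 0 < x -> (1 <= ceilN x)%nat.
Proof.
  intros Hx. assert (H := ceilN_ge x). destruct (ceilN x). simpl in H; lra. lia.
Qed.

Lemma Cmod_scal a z : Cmod (Cmult (RtoC a) z) = Rabs a * Cmod z.
Proof. rewrite Cmod_mult, Cmod_R. reflexivity. Qed.
Lemma fst_scal a z : fst (Cmult (RtoC a) z) = a * fst z.
Proof. destruct z; unfold Cmult, RtoC; simpl. ring. Qed.
Lemma Cmod_Q c z l : 0 <= c -> (1 <= l)%nat ->
  Cmod (Cpown (Cdiv (Cmult (RtoC c) z) (RtoC (INR l))) l) = (c * Cmod z / INR l) ^ l.
Proof.
  intros Hc Hl. rewrite Cmod_Cpown, Cmod_div_R, Cmod_scal, Rabs_pos_eq, (Rabs_pos_eq (INR l)); auto.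
  apply pos_INR. apply not_0_INR; lia.
Qed.
Lemma exp1_le3 : exp 1 <= 3. Proof. apply exp_le_3. Qed.
Lemma exp2_le9 : exp 2 <= 9.
Proof. replace 2 with (1+1) by ring. rewrite exp_plus. generalize exp1_le3 (exp_pos 1). nra. Qed.

Lemma small_bounds l z a : (1 <= l)%nat -> Rabs a * Cmod z <= INR l / exp 2 ->
  Cmod (Esum l (Cmult (RtoC a) z)) <= exp (a * fst z) * (1 + 2 * exp (- (INR l / 4))) /\
  exp (a * fst z) * (1 - exp (- (INR l / 4))) <= Cmod (Esum l (Cmult (RtoC a) z)).
Proof.
  intros Hl Hs. set (w := Cmult (RtoC a) z).
  assert (Hw : Cmod w <= INR l / exp 2) by (unfold w; rewrite Cmod_scal; auto).
  assert (Hd := delta_small l w Hw).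
  assert (Hd0 : 0 <= 2 * exp (Cmod w) * Cmod w ^ (S l) / INR (fact l)).
  { apply Rmult_le_pos. apply Rmult_le_pos. apply Rmult_le_pos. lra. left; apply exp_pos.
    apply pow_le, Cmod_ge_0. left; apply Rinv_0_lt_compat, fact_pos. }
  destruct (Esum_bounds l w) as [H1 H2].
  replace (fst w) with (a * fst z) in H1, H2 by (unfold w; rewrite fst_scal; reflexivity).
  assert (He := exp_pos (a * fst z)).
  split; fold w.
  - eapply Rle_trans. exact H2. apply Rmult_le_compat_l; lra.
  - eapply Rle_trans. 2: exact H1. apply Rmult_le_compat_l; lra.
Qed.

Lemma large_bound l z a kap c : (1 <= l)%nat -> Rabs a <= kap -> 64 * kap <= c ->
  INR l / exp 2 < kap * Cmod z ->
  Cmod (Esum l (Cmult (RtoC a) z)) <= (c * Cmod z / INR l) ^ l /\ 3 <= c * Cmod z / INR l.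
Proof.
  intros Hl Ha Hc Hlarge.
  assert (Hlp : 0 < INR l) by (apply lt_0_INR; lia).
  assert (He2 := exp2_le9). assert (He2' := exp2_ge4).
  assert (Hz := Cmod_ge_0 z). assert (Ha0 := Rabs_pos a).
  assert (Hk : 0 < kap * Cmod z).
  { eapply Rle_lt_trans. 2: exact Hlarge. apply Rmult_le_pos. lra. left; apply Rinv_0_lt_compat; lra. }
  assert (Hkz : 1 / 9 < kap * Cmod z / INR l).
  { assert (Hq : INR l / 9 <= INR l / exp 2).
    { unfold Rdiv. apply Rmult_le_compat_l. lra. apply Rinv_le_contravar; lra. }
    assert (Hq2 : INR l / 9 < kap * Cmod z) by lra.
    apply (Rmult_lt_reg_r (INR l)); auto.
    replace (kap * Cmod z / INR l * INR l) with (kap * Cmod z) by (field; lra). lra. }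
  assert (Hkap : 0 <= kap) by lra.
  assert (H3 : 3 <= c * Cmod z / INR l).
  { assert (64 * (kap * Cmod z / INR l) <= c * Cmod z / INR l).
    { unfold Rdiv. rewrite <- !Rmult_assoc. apply Rmult_le_compat_r. left; apply Rinv_0_lt_compat; lra.
      apply Rmult_le_compat_r; lra. }
    lra. }
  split; [|exact H3].
  eapply Rle_trans. apply Esum_large; auto.
  replace (exp (INR l)) with (exp 1 ^ l) by (rewrite exp_pow_n, Rmult_1_r; reflexivity).
  rewrite <- Rpow_mult_distr. apply pow_incr. split.
  - apply Rmult_le_pos. left; apply exp_pos. eapply Rle_trans. 2: apply Rmax_l. lra.
  - assert (He1 := exp1_le3). assert (He1' := exp_pos 1).
    apply Rmax_case_strong; intros _.
    + lra.
    + rewrite Cmod_scal.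
      assert (Rabs a * Cmod z / INR l <= kap * Cmod z / INR l).
      { unfold Rdiv. apply Rmult_le_compat_r. left; apply Rinv_0_lt_compat; lra. apply Rmult_le_compat_r; lra. }
      assert (0 <= Rabs a * Cmod z / INR l).
      { unfold Rdiv. apply Rmult_le_pos. nra. left; apply Rinv_0_lt_compat; lra. }
      assert (64 * (kap * Cmod z / INR l) <= c * Cmod z / INR l).
      { unfold Rdiv. rewrite <- !Rmult_assoc. apply Rmult_le_compat_r. left; apply Rinv_0_lt_compat; lra.
        apply Rmult_le_compat_r; lra. }
      nra.
Qed.

Lemma delta0_bounds l : (1 <= l)%nat -> 0 < exp (- (INR l / 4)) <= 4 / 5.
Proof.
  intros Hl. split. apply exp_pos.
  assert (H1 : INR 1 <= INR l) by (apply le_INR; lia). simpl in H1.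
  assert (H2 : exp (- (INR l / 4)) <= exp (- (1/4))) by (apply exp_mono; lra).
  assert (H3 : 5/4 <= exp (1/4)) by (generalize (exp_ineq1_le (1/4)); lra).
  rewrite (exp_Ropp (1/4)) in H2. assert (0 < exp (1/4)) by apply exp_pos.
  assert (/ exp (1/4) <= 4/5). { replace (4/5) with (/ (5/4)) by field. apply Rinv_le_contravar; lra. }
  lra.
Qed.

Lemma num1 d : 0 <= d <= 4/5 -> (1 + 2 * d) ^ 2 <= exp (14 * d) * (1 - d) ^ 2.
Proof.
  intros Hd.
  assert (Ha : 1 + 2 * d <= exp (2 * d)) by (generalize (exp_ineq1_le (2*d)); lra).
  assert (Hb : 1 <= (1 - d) * exp (5 * d)).
  { generalize (exp_ineq1_le (5*d)); intros. assert ((1-d)*(1+5*d) >= 1) by nra. nra. }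
  replace (exp (14 * d)) with (exp (2*d) ^ 2 * exp (5*d) ^ 2) by (rewrite !exp_pow_n, <- exp_plus; f_equal; simpl; ring).
  assert (0 <= 1 + 2 * d) by lra.
  assert ((1 + 2*d)^2 <= exp (2*d) ^2) by (apply pow_incr; lra).
  assert (1 <= ((1 - d) * exp (5 * d)) ^ 2) by (rewrite <- (pow1 2); apply pow_incr; lra).
  assert (0 <= exp (2*d) ^2) by (apply pow_le; left; apply exp_pos).
  rewrite Rpow_mult_distr in H1. nra.
Qed.

Definition kap (k : R) := Rmax (Rabs (k - 1)) k.
Definition cc (k : R) := 64 * Rmax 2 (k + 3 / 2).

Lemma kap_facts k : 0 < k -> 0 < kap k /\ Rabs (k-1) <= kap k /\ Rabs k <= kap k /\ 64 * kap k <= cc k.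
Proof.
  intros Hk. unfold kap, cc. rewrite (Rabs_pos_eq k) by lra. repeat split.
  - eapply Rlt_le_trans. exact Hk. apply Rmax_r.
  - apply Rmax_l.
  - apply Rmax_r.
  - apply Rmult_le_compat_l. lra. apply Rmax_lub.
    + eapply Rle_trans. 2: apply Rmax_r. apply Rabs_le. lra.
    + eapply Rle_trans. 2: apply Rmax_r. lra.
Qed.

Section Factor.
Variables (k : R) (l : nat) (z : C).
Hypothesis Hk : 0 < k.
Hypothesis Hl : (1 <= l)%nat.
Let A := Cmod (Esum l (Cmult (RtoC (k-1)) z)).
Let B := Cmod (Esum l (Cmult (RtoC k) z)).
Let B' := Cmod (Esum l (Cmult (RtoC k) (Cconj z))).
Let Q := Cmod (Cpown (Cdiv (Cmult (RtoC (64 * Rmax 2 (k + 3/2))) z) (RtoC (INR l))) l).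
Let D := B ^ 2 + Q ^ (2 * r_k k).
Let d := exp (- (INR l / 4)).

Lemma Q_eq : Q = (cc k * Cmod z / INR l) ^ l.
Proof. unfold Q, cc. apply Cmod_Q; auto. unfold Rmax. destruct Rle_dec; lra. Qed.

Lemma small_case : kap k * Cmod z <= INR l / exp 2 ->
  A <= exp ((k-1) * fst z) * (1 + 2 * d) /\
  B' <= exp (k * fst z) * (1 + 2 * d) /\
  exp (k * fst z) * (1 - d) <= B.
Proof.
  intros Hs. destruct (kap_facts k Hk) as [H0 [H1 [H2 H3]]].
  assert (Hz := Cmod_ge_0 z).
  destruct (small_bounds l z (k-1) Hl) as [Ha _]. { eapply Rle_trans; [|exact Hs]. apply Rmult_le_compat_r; auto. }
  destruct (small_bounds l (Cconj z) k Hl) as [Hb _]. { rewrite Cmod_conj. eapply Rle_trans; [|exact Hs]. apply Rmult_le_compat_r; auto. }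
  destruct (small_bounds l z k Hl) as [_ Hc]. { eapply Rle_trans; [|exact Hs]. apply Rmult_le_compat_r; auto. }
  replace (fst (Cconj z)) with (fst z) in Hb by reflexivity.
  unfold A, B, B', d. auto.
Qed.

Lemma large_case : INR l / exp 2 < kap k * Cmod z -> A <= Q /\ B' <= Q /\ 1 <= Q.
Proof.
  intros HL. destruct (kap_facts k Hk) as [H0 [H1 [H2 H3]]].
  destruct (large_bound l z (k-1) (kap k) (cc k) Hl H1 H3 HL) as [Ha Hq].
  destruct (large_bound l (Cconj z) k (kap k) (cc k) Hl H2 H3) as [Hb _]. { rewrite Cmod_conj; auto. }
  rewrite Cmod_conj in Hb.
  rewrite Q_eq. unfold A, B'. split; [|split]; auto.
  rewrite <- (pow1 l). apply pow_incr. lra.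
Qed.

Lemma factor_gt : 1/2 < k ->
  A * B' <= exp ((14 + 4 / k) * d) * rpow D ((2 * k - 1) / (2 * k)).
Proof.
  intros Hk2. set (th := (2 * k - 1) / (2 * k)).
  assert (Hth : 0 < th <= 1).
  { unfold th. split. apply Rdiv_lt_0_compat; lra. apply Rmult_le_reg_r with (2*k). lra.
    unfold Rdiv. rewrite Rmult_assoc, Rinv_l by lra. lra. }
  assert (Hd := delta0_bounds l Hl). fold d in Hd.
  assert (HA0 : 0 <= A) by apply Cmod_ge_0.
  assert (HB0 : 0 <= B) by apply Cmod_ge_0.
  assert (HB'0 : 0 <= B') by apply Cmod_ge_0.
  assert (HQ0 : 0 <= Q) by apply Cmod_ge_0.
  assert (HD : B ^ 2 <= D) by (unfold D; assert (0 <= Q ^ (2 * r_k k)) by (apply pow_le; auto); lra).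
  assert (HK : 1 <= exp ((14 + 4 / k) * d)).
  { rewrite <- exp_0. apply exp_mono. apply Rmult_le_pos. assert (0 < 4/k) by (apply Rdiv_lt_0_compat; lra). lra. lra. }
  destruct (Rle_dec (kap k * Cmod z) (INR l / exp 2)) as [Hs|Hs].
  - destruct (small_case Hs) as [Ha [Hb Hc]].
    set (x := fst z) in *.
    set (e1 := exp ((k-1) * x)) in *. set (e2 := exp (k * x)) in *.
    assert (He1 : 0 < e1) by apply exp_pos. assert (He2 : 0 < e2) by apply exp_pos.
    assert (Hlow : e1 * e2 * (1 - d) ^ 2 <= rpow D th).
    { apply Rle_trans with (rpow (B ^ 2) th). 2: apply rpow_le_base; [split; [apply pow_le; auto| exact HD] | lra].
      assert (0 <= e2 * (1 - d)) by (apply Rmult_le_pos; lra).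
      apply Rle_trans with (rpow ((e2 * (1 - d)) ^ 2) th). 2: apply rpow_le_base; [split; [apply pow_le; lra| apply pow_incr; split; [lra|exact Hc]] | lra].
      rewrite Rpow_mult_distr, rpow_mult by (apply pow_le; lra).
      apply Rmult_le_compat.
      - left; apply Rmult_lt_0_compat; auto.
      - apply pow_le; lra.
      - unfold e1, e2. rewrite exp_pow_n, rpow_exp, <- exp_plus. apply Req_le. f_equal.
        unfold th. simpl. field. lra.
      - apply rpow_ge_self. split. apply pow_lt; lra. rewrite <- (pow1 2). apply pow_incr; lra. lra. }
    assert (Hup : A * B' <= e1 * e2 * (1 + 2 * d) ^ 2).
    { replace (e1 * e2 * (1 + 2*d)^2) with ((e1 * (1 + 2*d)) * (e2 * (1 + 2*d))) by ring.
      apply Rmult_le_compat; auto. }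
    assert (Hn := num1 d (conj (Rlt_le _ _ (proj1 Hd)) (proj2 Hd))).
    assert (H14 : exp (14 * d) <= exp ((14 + 4 / k) * d)).
    { apply exp_mono. assert (0 < 4/k) by (apply Rdiv_lt_0_compat; lra). nra. }
    assert (0 <= (1 - d) ^ 2) by (apply pow_le; lra).
    assert (0 < e1 * e2) by (apply Rmult_lt_0_compat; auto).
    assert ((1 + 2 * d) ^ 2 <= exp ((14 + 4 / k) * d) * (1 - d) ^ 2) by nra.
    assert (0 <= rpow D th) by apply rpow_ge0.
    assert (e1 * e2 * (1 + 2 * d) ^ 2 <= e1 * e2 * (exp ((14 + 4 / k) * d) * (1 - d) ^ 2)) by (apply Rmult_le_compat_l; lra).
    assert (e1 * e2 * (exp ((14 + 4 / k) * d) * (1 - d) ^ 2) <= exp ((14 + 4 / k) * d) * rpow D th).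
    { replace (e1 * e2 * (exp ((14 + 4 / k) * d) * (1 - d) ^ 2)) with (exp ((14 + 4 / k) * d) * (e1 * e2 * (1 - d) ^ 2)) by ring.
      apply Rmult_le_compat_l. left; apply exp_pos. exact Hlow. }
    lra.
  - apply Rnot_le_lt in Hs. destruct (large_case Hs) as [Ha [Hb HQ]].
    assert (Hr : 2 <= INR (2 * r_k k) * th).
    { unfold r_k. destruct (Rle_dec k (1/2)) as [E|_]. lra.
      rewrite mult_INR, plus_INR. assert (Hc := ceilN_ge (2 * k / (2 * k - 1))).
      assert (Hp : 0 <= INR (ceilN (2 * k / (2 * k - 1))) * th).
      { apply Rmult_le_pos. apply pos_INR. lra. }
      assert (2 * k / (2 * k - 1) * th = 1) by (unfold th; field; lra).
      assert (2 * k / (2 * k - 1) * th <= INR (ceilN (2 * k / (2 * k - 1))) * th) by (apply Rmult_le_compat_r; lra).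
      simpl. lra. }
    assert (Hrr : (1 <= 2 * r_k k)%nat) by (unfold r_k; destruct Rle_dec; lia).
    assert (A * B' <= Q ^ 2) by (simpl; rewrite Rmult_1_r; apply Rmult_le_compat; auto).
    assert (Q ^ 2 <= rpow D th).
    { rewrite <- rpow_pow by (auto; lia).
      eapply Rle_trans. apply (rpow_le_exp Q (INR 2) (INR (2 * r_k k) * th)); auto.
      rewrite <- rpow_rpow by auto. rewrite rpow_pow by auto.
      apply rpow_le_base. split. apply pow_le; auto. unfold D. assert (0 <= B^2) by (apply pow_le; auto). lra. lra. }
    assert (0 <= rpow D th) by apply rpow_ge0.
    nra.
Qed.

Lemma factor_le : k <= 1/2 ->
  A ^ 2 * rpow B' (2 / k) <= exp ((14 + 4 / k) * d) * D.
Proof.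
  intros Hk2.
  assert (Hd := delta0_bounds l Hl). fold d in Hd.
  assert (HA0 : 0 <= A) by apply Cmod_ge_0.
  assert (HB0 : 0 <= B) by apply Cmod_ge_0.
  assert (HB'0 : 0 <= B') by apply Cmod_ge_0.
  assert (HQ0 : 0 <= Q) by apply Cmod_ge_0.
  assert (HD : B ^ 2 <= D) by (unfold D; assert (0 <= Q ^ (2 * r_k k)) by (apply pow_le; auto); lra).
  assert (Hk' : 0 < 2 / k) by (apply Rdiv_lt_0_compat; lra).
  assert (HK : 1 <= exp ((14 + 4 / k) * d)).
  { rewrite <- exp_0. apply exp_mono. apply Rmult_le_pos. assert (0 < 4/k) by (apply Rdiv_lt_0_compat; lra). lra. lra. }
  destruct (Rle_dec (kap k * Cmod z) (INR l / exp 2)) as [Hs|Hs].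
  - destruct (small_case Hs) as [Ha [Hb Hc]].
    set (x := fst z) in *.
    set (e1 := exp ((k-1) * x)) in *. set (e2 := exp (k * x)) in *.
    assert (He1 : 0 < e1) by apply exp_pos. assert (He2 : 0 < e2) by apply exp_pos.
    assert (H1 : A ^ 2 <= e1 ^ 2 * (1 + 2 * d) ^ 2).
    { rewrite <- Rpow_mult_distr. apply pow_incr; split; auto. }
    assert (H2 : rpow B' (2 / k) <= exp (2 * x) * exp (4 * d / k)).
    { eapply Rle_trans. apply rpow_le_base. split. exact HB'0. exact Hb. lra.
      rewrite rpow_mult by (lra || (left; apply exp_pos)).
      unfold e2. rewrite rpow_exp. apply Rmult_le_compat.
      - left; apply exp_pos.
      - apply rpow_ge0.
      - apply Req_le. f_equal. field. lra.
      - eapply Rle_trans. apply rpow_le_base. split. lra. apply (exp_ineq1_le (2 * d)). lra.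
        rewrite rpow_exp. apply Req_le. f_equal. field. lra. }
    assert (H3 : e2 ^ 2 * (1 - d) ^ 2 <= D).
    { eapply Rle_trans. 2: exact HD. rewrite <- Rpow_mult_distr. apply pow_incr. split.
      apply Rmult_le_pos; lra. exact Hc. }
    assert (Hid : e1 ^ 2 * exp (2 * x) = e2 ^ 2).
    { unfold e1, e2. rewrite !exp_pow_n, <- exp_plus. f_equal. simpl. ring. }
    assert (Hsplit : exp ((14 + 4 / k) * d) = exp (14 * d) * exp (4 * d / k)).
    { rewrite <- exp_plus. f_equal. field. lra. }
    assert (Hn := num1 d (conj (Rlt_le _ _ (proj1 Hd)) (proj2 Hd))).
    assert (0 <= (1 + 2*d)^2) by (apply pow_le; lra).
    assert (0 < exp (2 * x)) by apply exp_pos.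
    assert (0 < exp (4 * d / k)) by apply exp_pos.
    assert (0 < e1 ^ 2) by (apply pow_lt; auto).
    assert (0 <= rpow B' (2/k)) by apply rpow_ge0.
    assert (0 <= A ^ 2) by (apply pow_le; auto).
    apply Rle_trans with (e1 ^ 2 * (1 + 2 * d) ^ 2 * (exp (2 * x) * exp (4 * d / k))).
    { apply Rmult_le_compat; auto. }
    apply Rle_trans with (exp ((14 + 4 / k) * d) * (e2 ^ 2 * (1 - d) ^ 2)).
    2: { apply Rmult_le_compat_l. left; apply exp_pos. exact H3. }
    rewrite Hsplit, <- Hid.
    replace (e1 ^ 2 * (1 + 2 * d) ^ 2 * (exp (2 * x) * exp (4 * d / k))) with
      ((e1 ^ 2 * exp (2 * x) * exp (4 * d / k)) * (1 + 2 * d) ^ 2) by ring.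
    replace (exp (14 * d) * exp (4 * d / k) * (e1 ^ 2 * exp (2 * x) * (1 - d) ^ 2)) with
      ((e1 ^ 2 * exp (2 * x) * exp (4 * d / k)) * (exp (14 * d) * (1 - d) ^ 2)) by ring.
    apply Rmult_le_compat_l. apply Rmult_le_pos. apply Rmult_le_pos; lra. lra. exact Hn.
  - apply Rnot_le_lt in Hs. destruct (large_case Hs) as [Ha [Hb HQ]].
    assert (Hrr : (1 <= 2 * r_k k)%nat) by (unfold r_k; destruct Rle_dec; lia).
    assert (Hr : 2 + 2 / k <= INR (2 * r_k k)).
    { unfold r_k. destruct (Rle_dec k (1/2)) as [_|E]; [|lra].
      rewrite mult_INR, plus_INR. assert (Hc := ceilN_ge (1 / k)).
      replace (2 / k) with (2 * (1 / k)) by (field; lra). simpl. lra. }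
    assert (H1 : A ^ 2 <= Q ^ 2) by (apply pow_incr; split; auto).
    assert (H2 : rpow B' (2 / k) <= rpow Q (2 / k)) by (apply rpow_le_base; [split; auto| lra]).
    assert (H3 : Q ^ 2 * rpow Q (2 / k) <= Q ^ (2 * r_k k)).
    { rewrite <- (rpow_pow Q 2) by (auto; lia). rewrite <- rpow_plus by lra.
      rewrite <- rpow_pow by auto. apply rpow_le_exp; auto.
      }
    assert (0 <= rpow B' (2/k)) by apply rpow_ge0.
    assert (0 <= A ^ 2) by (apply pow_le; auto).
    assert (A ^ 2 * rpow B' (2 / k) <= Q ^ 2 * rpow Q (2 / k)) by (apply Rmult_le_compat; auto).
    assert (Q ^ (2 * r_k k) <= D) by (unfold D; assert (0 <= B^2) by (apply pow_le; auto); lra).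
    assert (0 <= D) by (assert (0 <= Q ^ (2 * r_k k)) by (apply pow_le; auto); lra).
    nra.
Qed.
End Factor.

Lemma Cconj_0 : Cconj (RtoC 0) = RtoC 0.
Proof. unfold Cconj, RtoC; simpl. f_equal. ring. Qed.

Lemma csum_conj {A} (l : list A) f : csum l (fun n => Cconj (f n)) = Cconj (csum l f).
Proof.
  induction l as [|a l IH]; unfold csum in *; simpl.
  - symmetry; apply Cconj_0.
  - rewrite IH, Cplus_conj. reflexivity.
Qed.

Lemma Crpow_conj a s : Crpow a (Copp (Cconj s)) = Cconj (Crpow a (Copp s)).
Proof.
  destruct s as [x y]. unfold Crpow, Cexp, Cconj, Copp, Cmult, RtoC, Re, Im; simpl.
  replace (ln a * - x - 0 * - - y) with (ln a * - x - 0 * - y) by ring.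
  replace (ln a * - - y + 0 * - x) with (- (ln a * - y + 0 * - x)) by ring.
  rewrite sin_neg, cos_neg. f_equal. ring.
Qed.

Lemma Pj_conj T j s : Pj T j (Cconj s) = Cconj (Pj T j s).
Proof.
  unfold Pj. rewrite <- csum_conj. unfold csum. f_equal. apply map_ext. intros n.
  destruct prime_dec; [|symmetry; apply Cconj_0].
  destruct Rlt_dec; [|symmetry; apply Cconj_0].
  destruct Rle_dec; [|symmetry; apply Cconj_0].
  apply Crpow_conj.
Qed.

Section Lists.
Context {A : Type}.
Implicit Types (l : list A) (f g : A -> R).

Lemma rprod_ge0 l f : (forall x, In x l -> 0 <= f x) -> 0 <= rprod l f.
Proof.
  induction l; unfold rprod in *; simpl; intros H. lra.
  apply Rmult_le_pos. apply H; auto. apply IHl. intros; apply H; auto.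
Qed.
Lemma rprod_le l f g : (forall x, In x l -> 0 <= f x <= g x) -> rprod l f <= rprod l g.
Proof.
  induction l; unfold rprod in *; simpl; intros H. lra.
  apply Rmult_le_compat. apply H; auto. apply rprod_ge0. intros; apply H; auto.
  apply H; auto. apply IHl. intros; apply H; auto.
Qed.
Lemma rprod_mult l f g : rprod l (fun x => f x * g x) = rprod l f * rprod l g.
Proof. induction l; unfold rprod in *; cbn [map fold_right]. ring. rewrite IHl. ring. Qed.
Lemma rprod_exp l f : rprod l (fun x => exp (f x)) = exp (rsum l f).
Proof. induction l; unfold rprod, rsum in *; simpl. rewrite exp_0; auto. rewrite IHl, exp_plus. ring. Qed.
Lemma rpow_one t : rpow 1 t = 1.
Proof. rewrite rpow_pos by lra. unfold Rpower. rewrite ln_1, Rmult_0_r. apply exp_0. Qed.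
Lemma rprod_rpow l f t : (forall x, In x l -> 0 <= f x) -> rprod l (fun x => rpow (f x) t) = rpow (rprod l f) t.
Proof.
  induction l; unfold rprod in *; simpl; intros H. rewrite rpow_one; auto.
  rewrite IHl by (intros; apply H; auto). rewrite rpow_mult. reflexivity. apply H; auto.
  apply (rprod_ge0 l f). intros; apply H; auto.
Qed.
Lemma rprod_pow2 l f : rprod l (fun x => f x ^ 2) = rprod l f ^ 2.
Proof. induction l; unfold rprod in *; cbn [map fold_right]. ring. rewrite IHl. ring. Qed.
Lemma Cmod_cprod l (F : A -> C) : Cmod (cprod l F) = rprod l (fun x => Cmod (F x)).
Proof. induction l; unfold cprod, rprod in *; simpl. apply Cmod_1. rewrite Cmod_mult, IHl. ring. Qed.
Lemma Cmod_csum_le l (F : A -> C) : Cmod (csum l F) <= rsum l (fun x => Cmod (F x)).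
Proof.
  induction l; unfold csum, rsum in *; simpl. rewrite Cmod_0; lra.
  eapply Rle_trans. apply Cmod_triangle. lra.
Qed.
Lemma rsum_le l f g : (forall x, In x l -> f x <= g x) -> rsum l f <= rsum l g.
Proof.
  induction l; unfold rsum in *; simpl; intros H. lra.
  apply Rplus_le_compat. apply H; auto. apply IHl. intros; apply H; auto.
Qed.
Lemma rsum_ge0 l f : (forall x, In x l -> 0 <= f x) -> 0 <= rsum l f.
Proof.
  induction l; unfold rsum in *; simpl; intros H. lra.
  apply Rplus_le_le_0_compat. apply H; auto. apply IHl. intros; apply H; auto.
Qed.
Lemma rsum_scal l f c : rsum l (fun x => c * f x) = c * rsum l f.
Proof. induction l; unfold rsum in *; simpl. ring. rewrite IHl. ring. Qed.
Lemma rsum_plus l f g : rsum l (fun x => f x + g x) = rsum l f + rsum l g.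
Proof. induction l; unfold rsum in *; simpl. ring. rewrite IHl. ring. Qed.
Lemma rsum_eq0 l f : (forall x, In x l -> 0 <= f x) -> rsum l f = 0 -> forall x, In x l -> f x = 0.
Proof.
  induction l; unfold rsum in *; simpl; intros H E x Hx. contradiction.
  assert (0 <= f a) by (apply H; auto).
  assert (0 <= fold_right Rplus 0 (map f l)) by (apply (rsum_ge0 l f); intros; apply H; auto).
  destruct Hx as [<-|Hx]. lra. apply IHl; [intros; apply H; auto | lra | auto].
Qed.
End Lists.

Lemma exp_convex t x y : 0 <= t <= 1 -> exp (t * x + (1 - t) * y) <= t * exp x + (1 - t) * exp y.
Proof.
  intros Ht. set (m := t * x + (1 - t) * y).
  assert (Hx : exp m * (1 + (x - m)) <= exp x).
  { replace (exp x) with (exp m * exp (x - m)) by (rewrite <- exp_plus; f_equal; ring).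
    apply Rmult_le_compat_l. left; apply exp_pos. apply exp_ineq1_le. }
  assert (Hy : exp m * (1 + (y - m)) <= exp y).
  { replace (exp y) with (exp m * exp (y - m)) by (rewrite <- exp_plus; f_equal; ring).
    apply Rmult_le_compat_l. left; apply exp_pos. apply exp_ineq1_le. }
  assert (Hid : t * (exp m * (1 + (x - m))) + (1 - t) * (exp m * (1 + (y - m))) = exp m) by (unfold m; ring).
  assert (t * (exp m * (1 + (x - m))) <= t * exp x) by (apply Rmult_le_compat_l; lra).
  assert ((1-t) * (exp m * (1 + (y - m))) <= (1-t) * exp y) by (apply Rmult_le_compat_l; lra).
  lra.
Qed.

Lemma young a b p q : 1 < p -> 1 < q -> 1 / p + 1 / q = 1 -> 0 <= a -> 0 <= b ->
  a * b <= rpow a p / p + rpow b q / q.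
Proof.
  intros Hp Hq Hpq Ha Hb.
  assert (Hr1 : 0 <= rpow a p / p) by (apply Rmult_le_pos; [apply rpow_ge0| left; apply Rinv_0_lt_compat; lra]).
  assert (Hr2 : 0 <= rpow b q / q) by (apply Rmult_le_pos; [apply rpow_ge0| left; apply Rinv_0_lt_compat; lra]).
  destruct (Rle_lt_or_eq_dec _ _ Ha) as [Ha'|Ha']; [|subst; lra].
  destruct (Rle_lt_or_eq_dec _ _ Hb) as [Hb'|Hb']; [|subst; lra].
  rewrite !rpow_pos by auto. unfold Rpower.
  replace (a * b) with (exp ((1/p) * (p * ln a) + (1 - 1/p) * (q * ln b))).
  2:{ replace (1 - 1/p) with (1/q) by lra. rewrite exp_plus.
      replace (1 / p * (p * ln a)) with (ln a) by (field; lra).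
      replace (1 / q * (q * ln b)) with (ln b) by (field; lra). rewrite !exp_ln; auto. }
  eapply Rle_trans. apply exp_convex.
  split; [apply Rlt_le, Rdiv_lt_0_compat; lra| ]. assert (0 < 1/q) by (apply Rdiv_lt_0_compat; lra). lra.
  replace (1 - 1/p) with (1/q) by lra. unfold Rdiv. lra.
Qed.

Lemma rpow_inv x p : 0 < x -> rpow (/ x) p = / rpow x p.
Proof.
  intros Hx. rewrite !rpow_pos by (auto; apply Rinv_0_lt_compat; auto).
  unfold Rpower. rewrite ln_Rinv by auto. rewrite <- exp_Ropp. f_equal. ring.
Qed.

Lemma rsum_ext_in {A} (l : list A) F G : (forall x, In x l -> F x = G x) -> rsum l F = rsum l G.
Proof. intros H. unfold rsum. f_equal. apply map_ext_in. auto. Qed.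
Lemma rsum_zero {A} (l : list A) : rsum l (fun _ => 0) = 0.
Proof. induction l; unfold rsum in *; simpl; auto. rewrite IHl; ring. Qed.

Lemma zero_term {A} (l : list A) (w f : A -> R) p :
  (forall x, In x l -> 0 <= w x /\ 0 <= f x) -> rsum l (fun x => w x * rpow (f x) p) = 0 ->
  forall x, In x l -> w x * f x = 0.
Proof.
  intros H E x Hx.
  assert (E' := rsum_eq0 l (fun x => w x * rpow (f x) p)).
  destruct (H x Hx) as [h1 h2].
  assert (Ex : w x * rpow (f x) p = 0).
  { apply E'; auto. intros y Hy. destruct (H y Hy). apply Rmult_le_pos; auto. apply rpow_ge0. }
  destruct (Rle_lt_or_eq_dec _ _ h1) as [h1'|h1']; [|rewrite <- h1'; ring].
  destruct (Rle_lt_or_eq_dec _ _ h2) as [h2'|h2']; [|rewrite <- h2'; ring].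
  assert (0 < rpow (f x) p) by (apply rpow_gt0; auto). nra.
Qed.

Lemma holder {A} (l : list A) (w f g : A -> R) (p q : R) :
  1 < p -> 1 < q -> 1 / p + 1 / q = 1 ->
  (forall x, In x l -> 0 <= w x /\ 0 <= f x /\ 0 <= g x) ->
  rsum l (fun x => w x * (f x * g x)) <=
  rpow (rsum l (fun x => w x * rpow (f x) p)) (1 / p) *
  rpow (rsum l (fun x => w x * rpow (g x) q)) (1 / q).
Proof.
  intros Hp Hq Hpq H.
  set (S := rsum l (fun x => w x * rpow (f x) p)).
  set (U := rsum l (fun x => w x * rpow (g x) q)).
  assert (HS0 : 0 <= S) by (apply rsum_ge0; intros x Hx; destruct (H x Hx) as [? [? ?]]; apply Rmult_le_pos; auto; apply rpow_ge0).
  assert (HU0 : 0 <= U) by (apply rsum_ge0; intros x Hx; destruct (H x Hx) as [? [? ?]]; apply Rmult_le_pos; auto; apply rpow_ge0).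
  assert (Hprod0 : 0 <= rpow S (1/p) * rpow U (1/q)) by (apply Rmult_le_pos; apply rpow_ge0).
  destruct (Rle_lt_or_eq_dec _ _ HS0) as [HS|HS].
  2:{ assert (E := zero_term l w f p (fun x Hx => let '(conj h1 (conj h2 _)) := H x Hx in conj h1 h2) (eq_sym HS)).
      rewrite (rsum_ext_in l _ (fun _ => 0)), rsum_zero; auto.
      intros x Hx. replace (w x * (f x * g x)) with ((w x * f x) * g x) by ring. rewrite E; auto. ring. }
  destruct (Rle_lt_or_eq_dec _ _ HU0) as [HU|HU].
  2:{ assert (E := zero_term l w g q (fun x Hx => let '(conj h1 (conj _ h3)) := H x Hx in conj h1 h3) (eq_sym HU)).
      rewrite (rsum_ext_in l _ (fun _ => 0)), rsum_zero; auto.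
      intros x Hx. replace (w x * (f x * g x)) with (f x * (w x * g x)) by ring. rewrite E; auto. ring. }
  set (a := rpow S (1/p)). set (b := rpow U (1/q)).
  assert (Ha : 0 < a) by (apply rpow_gt0; auto).
  assert (Hb : 0 < b) by (apply rpow_gt0; auto).
  assert (Hap : rpow a p = S) by (unfold a; rewrite rpow_rpow by lra; replace (1/p*p) with 1 by (field; lra); apply rpow_1; lra).
  assert (Hbq : rpow b q = U) by (unfold b; rewrite rpow_rpow by lra; replace (1/q*q) with 1 by (field; lra); apply rpow_1; lra).
  assert (Hpt : forall x, In x l -> w x * (f x * g x) <= a * b * (w x * rpow (f x) p / (p * S) + w x * rpow (g x) q / (q * U))).
  { intros x Hx. destruct (H x Hx) as [h1 [h2 h3]].
    assert (Y := young (f x * / a) (g x * / b) p q Hp Hq Hpq).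
    rewrite !rpow_mult, !rpow_inv, Hap, Hbq in Y by (auto; left; apply Rinv_0_lt_compat; auto).
    assert (Y' : f x * g x <= a * b * (rpow (f x) p / (p * S) + rpow (g x) q / (q * U))).
    { assert (0 <= f x * / a) by (apply Rmult_le_pos; auto; left; apply Rinv_0_lt_compat; auto).
      assert (0 <= g x * / b) by (apply Rmult_le_pos; auto; left; apply Rinv_0_lt_compat; auto).
      specialize (Y H0 H1).
      replace (f x * g x) with (a * b * (f x * / a * (g x * / b))) by (field; lra).
      apply Rmult_le_compat_l. nra.
      replace (rpow (f x) p / (p * S) + rpow (g x) q / (q * U)) with
        (rpow (f x) p * / S / p + rpow (g x) q * / U / q) by (field; lra). exact Y. }
    replace (a * b * (w x * rpow (f x) p / (p * S) + w x * rpow (g x) q / (q * U))) with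
      (w x * (a * b * (rpow (f x) p / (p * S) + rpow (g x) q / (q * U)))) by (unfold Rdiv; ring).
    apply Rmult_le_compat_l; auto. }
  eapply Rle_trans. apply rsum_le. exact Hpt.
  rewrite rsum_scal, rsum_plus.
  assert (E1 : rsum l (fun x => w x * rpow (f x) p / (p * S)) = / p).
  { rewrite (rsum_ext_in l _ (fun x => / (p * S) * (w x * rpow (f x) p))) by (intros; unfold Rdiv; ring).
    rewrite rsum_scal. fold S. field. lra. }
  assert (E2 : rsum l (fun x => w x * rpow (g x) q / (q * U)) = / q).
  { rewrite (rsum_ext_in l _ (fun x => / (q * U) * (w x * rpow (g x) q))) by (intros; unfold Rdiv; ring).
    rewrite rsum_scal. fold U. field. lra. }
  rewrite E1, E2. unfold Rdiv in Hpq. rewrite !Rmult_1_l in Hpq. rewrite Hpq. lra.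
Qed.


Lemma holder3 {A} (l : list A) (w f g h : A -> R) (p1 p2 p3 : R) :
  1 < p1 -> 1 < p2 -> 1 < p3 -> 1 / p1 + 1 / p2 + 1 / p3 = 1 ->
  (forall x, In x l -> 0 <= w x /\ 0 <= f x /\ 0 <= g x /\ 0 <= h x) ->
  rsum l (fun x => w x * (f x * g x * h x)) <=
  rpow (rsum l (fun x => w x * rpow (f x) p1)) (1 / p1) *
  rpow (rsum l (fun x => w x * rpow (g x) p2)) (1 / p2) *
  rpow (rsum l (fun x => w x * rpow (h x) p3)) (1 / p3).
Proof.
  intros H1 H2 H3 Hs H.
  set (t := 1 / p2 + 1 / p3).
  assert (Ht : 0 < t < 1).
  { unfold t. assert (0 < 1/p1) by (apply Rdiv_lt_0_compat; lra).
    assert (0 < 1/p2) by (apply Rdiv_lt_0_compat; lra). assert (0 < 1/p3) by (apply Rdiv_lt_0_compat; lra). lra. }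
  set (s := / t).
  assert (Hs1 : 1 < s). { unfold s. rewrite <- Rinv_1. apply Rinv_lt_contravar; lra. }
  assert (Hps : 1 / p1 + 1 / s = 1) by (replace (1 / s) with t by (unfold s; field; lra); unfold t; lra).
  assert (Step1 := holder l w f (fun x => g x * h x) p1 s H1 Hs1 Hps).
  rewrite (rsum_ext_in l (fun x => w x * (f x * g x * h x)) (fun x => w x * (f x * (g x * h x)))) by (intros; ring).
  eapply Rle_trans. apply Step1. intros x Hx. destruct (H x Hx) as [? [? [? ?]]]. repeat split; auto. nra.
  rewrite Rmult_assoc. apply Rmult_le_compat_l. apply rpow_ge0.
  set (X := rsum l (fun x => w x * rpow (g x) p2)). set (Y := rsum l (fun x => w x * rpow (h x) p3)).
  assert (HP : 1 < p2 / s).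
  { replace (p2 / s) with (p2 * t) by (unfold s; field; lra). unfold t.
    assert (0 < 1/p3) by (apply Rdiv_lt_0_compat; lra).
    assert (p2 * (1/p2) = 1) by (field; lra). nra. }
  assert (HQ : 1 < p3 / s).
  { replace (p3 / s) with (p3 * t) by (unfold s; field; lra). unfold t.
    assert (0 < 1/p2) by (apply Rdiv_lt_0_compat; lra).
    assert (p3 * (1/p3) = 1) by (field; lra). nra. }
  assert (HPQ : 1 / (p2 / s) + 1 / (p3 / s) = 1).
  { replace (p2 / s) with (p2 * t) by (unfold s; field; lra).
    replace (p3 / s) with (p3 * t) by (unfold s; field; lra).
    unfold t. field. unfold t in Ht. repeat split; try lra. }
  assert (Step2 := holder l w (fun x => rpow (g x) s) (fun x => rpow (h x) s) (p2 / s) (p3 / s) HP HQ HPQ).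
  assert (E2 : rsum l (fun x => w x * rpow (g x * h x) s) = rsum l (fun x => w x * (rpow (g x) s * rpow (h x) s))).
  { apply rsum_ext_in. intros x Hx. destruct (H x Hx) as [? [? [? ?]]]. rewrite rpow_mult; auto. }
  assert (EX : rsum l (fun x => w x * rpow (rpow (g x) s) (p2 / s)) = X).
  { apply rsum_ext_in. intros x Hx. destruct (H x Hx) as [? [? [? ?]]]. rewrite rpow_rpow by auto.
    f_equal. f_equal. field. lra. }
  assert (EY : rsum l (fun x => w x * rpow (rpow (h x) s) (p3 / s)) = Y).
  { apply rsum_ext_in. intros x Hx. destruct (H x Hx) as [? [? [? ?]]]. rewrite rpow_rpow by auto.
    f_equal. f_equal. field. lra. }
  cbv beta in Step2. rewrite EX, EY in Step2.
  assert (HX0 : 0 <= X) by (apply rsum_ge0; intros x Hx; destruct (H x Hx) as [? [? [? ?]]]; apply Rmult_le_pos; auto; apply rpow_ge0).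
  assert (HY0 : 0 <= Y) by (apply rsum_ge0; intros x Hx; destruct (H x Hx) as [? [? [? ?]]]; apply Rmult_le_pos; auto; apply rpow_ge0).
  rewrite E2.
  eapply Rle_trans. apply rpow_le_base. split.
  - apply rsum_ge0. intros x Hx; destruct (H x Hx) as [? [? [? ?]]]. apply Rmult_le_pos; auto. apply Rmult_le_pos; apply rpow_ge0.
  - apply Step2. intros x Hx; destruct (H x Hx) as [? [? [? ?]]]. repeat split; auto; apply rpow_ge0.
  - left; apply Rdiv_lt_0_compat; lra.
  - rewrite rpow_mult by apply rpow_ge0. rewrite !rpow_rpow by auto.
    apply Req_le. f_equal; f_equal; unfold s; field; split; lra.
Qed.

Lemma rsum_app {A} (l1 l2 : list A) f : rsum (l1 ++ l2) f = rsum l1 f + rsum l2 f.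
Proof. induction l1; unfold rsum in *; simpl. ring. rewrite IHl1. ring. Qed.

Lemma geom20 n : rsum (seq 1 n) (fun j => 20 ^ (j - 1)) * 19 + 1 = 20 ^ n.
Proof.
  induction n. unfold rsum; simpl. ring.
  rewrite seq_S, rsum_app. unfold rsum at 2. simpl.
  replace (n - 0)%nat with n by lia. simpl pow. lra.
Qed.

Lemma alpha_S T j : alpha T (S j) = 20 ^ j / (ln (ln T)) ^ 2.
Proof. reflexivity. Qed.

Lemma Mpow_small M : 20 <= M -> Rpower 10 (- M) <= 1 / 20.
Proof.
  intros HM. unfold Rpower.
  assert (Hl : 1 <= ln 10).
  { rewrite <- (ln_exp 1). destruct (Rle_lt_or_eq_dec (exp 1) 10) as [E|E].
    generalize exp1_le3; lra. left; apply ln_increasing; auto. apply exp_pos. rewrite E; lra. }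
  apply Rle_trans with (exp (- M)). apply exp_mono. nra.
  rewrite exp_Ropp. assert (21 <= exp M) by (generalize (exp_ineq1_le M); lra).
  replace (1/20) with (/ 20) by field. apply Rinv_le_contravar; lra.
Qed.

Section Alpha.
Variables (T M : R) (J : nat).
Hypothesis HT : exp (exp 1) <= T.
Hypothesis HM : 20 <= M.
Hypothesis HJ : is_calJ T M J.

Lemma LL_ge1 : 1 <= ln (ln T).
Proof.
  assert (H1 : exp 1 <= ln T).
  { rewrite <- (ln_exp (exp 1)). destruct (Rle_lt_or_eq_dec _ _ HT) as [E|E].
    left; apply ln_increasing; auto. apply exp_pos. rewrite E; lra. }
  rewrite <- (ln_exp 1) at 1. destruct (Rle_lt_or_eq_dec _ _ H1) as [E|E].
  left; apply ln_increasing; auto. apply exp_pos. rewrite E; lra.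
Qed.

Lemma alphaJ_le1 : alpha T J <= 1.
Proof.
  destruct HJ as [H1 [H2 _]].
  assert (HL := LL_ge1).
  assert (HL2 : 1 <= ln (ln T) ^ 2) by (rewrite <- (pow1 2); apply pow_incr; lra).
  destruct J as [|J']. lia. destruct J' as [|J''].
  - rewrite alpha_S. simpl pow. unfold Rdiv. rewrite Rmult_1_l. rewrite <- Rinv_1. apply Rinv_le_contravar; lra.
  - replace (S (S J'') - 1)%nat with (S J'') in H2 by lia.
    rewrite alpha_S in *. assert (H3 := Mpow_small M HM).
    replace (20 ^ S J'') with (20 * 20 ^ J'') by reflexivity.
    unfold Rdiv in *. rewrite Rmult_assoc.
    assert (20 ^ J'' * / ln (ln T) ^ 2 <= 1/20) by lra. lra.
Qed.

Lemma alpha_pos j : (1 <= j)%nat -> 0 < alpha T j.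
Proof.
  intros Hj. destruct j. lia. rewrite alpha_S. apply Rdiv_lt_0_compat. apply pow_lt; lra.
  apply pow_lt. generalize LL_ge1; lra.
Qed.

Lemma alpha_le_J j : (1 <= j <= J)%nat -> alpha T j <= alpha T J.
Proof.
  intros Hj. destruct j. lia. destruct J as [|J']. lia. rewrite !alpha_S.
  unfold Rdiv. apply Rmult_le_compat_r. left; apply Rinv_0_lt_compat, pow_lt; generalize LL_ge1; lra.
  apply Rle_pow. lra. lia.
Qed.

Lemma alpha_sum : rsum (seq 1 J) (fun j => alpha T j) <= 2.
Proof.
  assert (HL := LL_ge1). assert (HL2 : 0 < ln (ln T) ^ 2) by (apply pow_lt; lra).
  rewrite (rsum_ext_in _ _ (fun j => / ln (ln T) ^ 2 * 20 ^ (j - 1))).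
  2:{ intros j Hj. apply in_seq in Hj. destruct j. lia. rewrite alpha_S. simpl (S j - 1)%nat.
      replace (j - 0)%nat with j by lia. unfold Rdiv. ring. }
  rewrite rsum_scal. assert (G := geom20 J).
  assert (HA := alphaJ_le1).
  destruct HJ as [H1 _]. destruct J as [|J']. lia.
  rewrite alpha_S in HA. replace (20 ^ S J') with (20 * 20 ^ J') in G by reflexivity.
  assert (0 < / ln (ln T) ^ 2) by (apply Rinv_0_lt_compat; auto).
  unfold Rdiv in HA.
  assert (/ ln (ln T) ^ 2 * rsum (seq 1 (S J')) (fun j => 20 ^ (j - 1)) * 19 <= 20 * (20 ^ J' * / ln (ln T) ^ 2)) by nra.
  lra.
Qed.
End Alpha.

Lemma exp_sq_lower x : 0 <= x -> x ^ 2 / 4 <= exp x.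
Proof.
  intros Hx. replace (exp x) with (exp (x/2) ^ 2) by (rewrite exp_pow_n; f_equal; simpl; field).
  assert (1 + x/2 <= exp (x/2)) by apply exp_ineq1_le.
  assert (x/2 <= exp (x/2)) by lra.
  assert ((x/2)^2 <= exp (x/2) ^2) by (apply pow_incr; lra).
  replace (x^2/4) with ((x/2)^2) by field. lra.
Qed.

Lemma eps_bound k T j : 0 < k -> 0 < alpha T j <= 1 ->
  exp (- (INR (ceilN (ellj k T j)) / 4)) <= 4 * alpha T j / k ^ 2.
Proof.
  intros Hk [Ha0 Ha1].
  set (a := alpha T j) in *.
  set (L := INR (ceilN (ellj k T j))).
  assert (HeL := ceilN_ge (ellj k T j)). fold L in HeL.
  assert (Hp : 1 / a <= Rpower a (- (3/4)) ^ 2).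
  { rewrite <- Rpower_pow by (unfold Rpower; apply exp_pos). rewrite Rpower_mult.
    replace (1 / a) with (Rpower a (Ropp 1)) by (rewrite Rpower_Ropp, Rpower_1 by auto; field; lra).
    unfold Rpower. apply exp_mono. assert (ln a <= 0).
    { destruct (Rle_lt_or_eq_dec _ _ Ha1). left; rewrite <- ln_1; apply ln_increasing; lra. subst; rewrite e, ln_1; lra. }
    simpl. nra. }
  assert (Hell : 0 < ellj k T j).
  { unfold ellj. apply Rmult_lt_0_compat. apply Rmult_lt_0_compat. apply exp_pos. auto. apply exp_pos. }
  assert (HL0 : 0 < L) by lra.
  assert (HL2 : exp 2 ^ 2 * k ^ 2 / a <= L ^ 2).
  { apply Rle_trans with (ellj k T j ^ 2). unfold ellj. rewrite !Rpow_mult_distr.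
    replace (exp 2 ^ 2 * k ^ 2 / a) with (exp 2 ^ 2 * k ^ 2 * (1 / a)) by (field; lra).
    apply Rmult_le_compat_l. apply Rmult_le_pos; apply pow_le; [left; apply exp_pos|lra]. exact Hp.
    apply pow_incr; lra. }
  assert (He : L ^ 2 / 64 <= exp (L / 4)).
  { replace (L ^ 2 / 64) with ((L/4)^2/4) by field. apply exp_sq_lower. lra. }
  assert (He2 := exp2_ge4).
  assert (H16 : 16 <= exp 2 ^ 2) by (simpl; nra).
  replace (exp (- (L / 4))) with (/ exp (L / 4)) by (rewrite exp_Ropp; reflexivity).
  assert (0 < exp (L/4)) by apply exp_pos.
  assert (Hk2 : 0 < k ^ 2) by (apply pow_lt; lra).
  assert (16 * k ^ 2 / a <= exp 2 ^ 2 * k ^ 2 / a).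
  { unfold Rdiv. apply Rmult_le_compat_r. left; apply Rinv_0_lt_compat; lra. nra. }
  assert (Hfin : 16 * k ^ 2 / a / 64 <= exp (L / 4)) by lra.
  replace (4 * a / k ^ 2) with (/ (16 * k ^ 2 / a / 64)) by (field; lra).
  apply Rinv_le_contravar; auto. apply Rdiv_lt_0_compat; [|lra]. apply Rdiv_lt_0_compat; lra.
Qed.

Lemma ellj_pos k T j : 0 < k -> 0 < alpha T j -> 0 < ellj k T j.
Proof. intros Hk Ha. unfold ellj. apply Rmult_lt_0_compat. apply Rmult_lt_0_compat. apply exp_pos. auto. apply exp_pos. Qed.

Definition Dj k T j s := Cmod (Nj k T j s k) ^ 2 + Cmod (Qj k T j s) ^ (2 * r_k k).
Definition dj k T j := exp (- (INR (ceilN (ellj k T j)) / 4)).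

Lemma per_j_gt k T j s : 1/2 < k -> 0 < alpha T j ->
  Cmod (Nj k T j s (k-1)) * Cmod (Nj k T j (Cconj s) k) <=
  exp ((14 + 4 / k) * dj k T j) * rpow (Dj k T j s) ((2 * k - 1) / (2 * k)).
Proof.
  intros Hk Ha. unfold Nj, Dj, Qj, Nj, dj. rewrite !Eexp_Esum, Pj_conj.
  apply factor_gt; try lra. apply ceilN_pos, ellj_pos; auto; lra.
Qed.

Lemma per_j_le k T j s : 0 < k <= 1/2 -> 0 < alpha T j ->
  Cmod (Nj k T j s (k-1)) ^ 2 * rpow (Cmod (Nj k T j (Cconj s) k)) (2 / k) <=
  exp ((14 + 4 / k) * dj k T j) * Dj k T j s.
Proof.
  intros Hk Ha. unfold Nj, Dj, Qj, Nj, dj. rewrite !Eexp_Esum, Pj_conj.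
  apply factor_le; try lra. apply ceilN_pos, ellj_pos; auto; lra.
Qed.

Section Prod.
Variables (k T : R) (J : nat).
Hypothesis Hk : 0 < k.
Hypothesis Halpha : forall j, In j (seq 1 J) -> 0 < alpha T j <= 1.
Hypothesis Hsum : rsum (seq 1 J) (fun j => alpha T j) <= 2.

Lemma dsum_bound : rsum (seq 1 J) (fun j => (14 + 4 / k) * dj k T j) <= (14 + 4 / k) * (8 / k ^ 2).
Proof.
  rewrite rsum_scal. apply Rmult_le_compat_l. assert (0 < 4/k) by (apply Rdiv_lt_0_compat; lra). lra.
  apply Rle_trans with (rsum (seq 1 J) (fun j => 4 / k ^ 2 * alpha T j)).
  - apply rsum_le. intros j Hj. unfold dj. eapply Rle_trans. apply eps_bound; auto. unfold Rdiv; lra.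
  - rewrite rsum_scal. assert (0 < 4 / k ^ 2) by (apply Rdiv_lt_0_compat; [lra| apply pow_lt; lra]).
    replace (8 / k ^ 2) with (4 / k ^ 2 * 2) by (unfold Rdiv; ring). apply Rmult_le_compat_l; [lra | exact Hsum].
Qed.

Lemma Dj_ge0 j s : 0 <= Dj k T j s.
Proof. unfold Dj. apply Rplus_le_le_0_compat; apply pow_le, Cmod_ge_0. Qed.

Lemma prodNQ_eq s : prodNQ k T J s = rprod (seq 1 J) (fun j => Dj k T j s).
Proof. reflexivity. Qed.

Lemma prodNQ_ge0 s : 0 <= prodNQ k T J s.
Proof. rewrite prodNQ_eq. apply rprod_ge0. intros; apply Dj_ge0. Qed.

Lemma prod_gt s : 1/2 < k ->
  Cmod (Nmol k T J s (k-1)) * Cmod (Nmol k T J (Cconj s) k) <=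
  exp ((14 + 4 / k) * (8 / k ^ 2)) * rpow (prodNQ k T J s) ((2 * k - 1) / (2 * k)).
Proof.
  intros Hk2. unfold Nmol. rewrite !Cmod_cprod, <- rprod_mult.
  eapply Rle_trans. apply rprod_le with (g := fun j => exp ((14 + 4 / k) * dj k T j) * rpow (Dj k T j s) ((2 * k - 1) / (2 * k))).
  - intros j Hj. split. apply Rmult_le_pos; apply Cmod_ge_0. apply per_j_gt; auto. apply Halpha; auto.
  - rewrite rprod_mult, rprod_exp, rprod_rpow by (intros; apply Dj_ge0). rewrite <- prodNQ_eq.
    apply Rmult_le_compat_r. apply rpow_ge0. apply exp_mono. apply dsum_bound.
Qed.

Lemma prod_le s : k <= 1/2 ->
  Cmod (Nmol k T J s (k-1)) ^ 2 * rpow (Cmod (Nmol k T J (Cconj s) k)) (2 / k) <=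
  exp ((14 + 4 / k) * (8 / k ^ 2)) * prodNQ k T J s.
Proof.
  intros Hk2. unfold Nmol. rewrite !Cmod_cprod, <- rprod_pow2, <- rprod_rpow by (intros; apply Cmod_ge_0).
  rewrite <- rprod_mult.
  eapply Rle_trans. apply rprod_le with (g := fun j => exp ((14 + 4 / k) * dj k T j) * Dj k T j s).
  - intros j Hj. split. apply Rmult_le_pos. apply pow_le, Cmod_ge_0. apply rpow_ge0.
    apply per_j_le. split; lra. apply (Halpha j Hj).
  - rewrite rprod_mult, rprod_exp. rewrite <- prodNQ_eq.
    apply Rmult_le_compat_r. apply prodNQ_ge0. apply exp_mono. apply dsum_bound.
Qed.
End Prod.

Lemma setup T M J : exp (exp 1) <= T -> 20 <= M -> is_calJ T M J ->
  (forall j, In j (seq 1 J) -> 0 < alpha T j <= 1) /\ rsum (seq 1 J) (fun j => alpha T j) <= 2.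
Proof.
  intros HT HM HJ. split.
  - intros j Hj. apply in_seq in Hj. split. apply (alpha_pos T); auto; lia.
    eapply Rle_trans. apply (alpha_le_J T M J HT); auto; lia. apply (alphaJ_le1 T M J HT HM HJ).
  - apply (alpha_sum T M J HT HM HJ).
Qed.

Lemma fgh X a b k : 0 <= X -> 0 <= a -> 0 < k < 1 ->
  X * (a * b) = rpow X k * rpow (X * a) (1 - k) * (rpow a k * b).
Proof.
  intros HX Ha Hk.
  destruct (Rle_lt_or_eq_dec _ _ HX) as [HX'|HX']; [|subst; rewrite (rpow_nonpos 0) by lra; ring].
  destruct (Rle_lt_or_eq_dec _ _ Ha) as [Ha'|Ha']; [|subst; rewrite Rmult_0_r, (rpow_nonpos 0) by lra; ring].
  rewrite rpow_mult by lra.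
  transitivity ((rpow X k * rpow X (1 - k)) * (rpow a (1 - k) * rpow a k) * b).
  - rewrite <- !rpow_plus by auto. replace (k + (1 - k)) with 1 by ring. replace (1 - k + k) with 1 by ring.
    rewrite !rpow_1 by lra. ring.
  - ring.
Qed.

Lemma stepA k T J l :
  Cmod (zsumC l (fun r => Cmult (Cmult (zeta' r) (Nmol k T J r (k - 1))) (Nmol k T J (Cconj r) k)))
  <= rsum l (fun p => INR (snd p) * (Cmod (zeta' (rho (fst p))) *
        (Cmod (Nmol k T J (rho (fst p)) (k - 1)) * Cmod (Nmol k T J (Cconj (rho (fst p))) k)))).
Proof.
  unfold zsumC. eapply Rle_trans. apply Cmod_csum_le. apply Req_le. apply rsum_ext_in. intros p _.
  rewrite !Cmod_mult, Cmod_R, Rabs_pos_eq by apply pos_INR. ring.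
Qed.

Theorem lemma3p3 :
  RH ->
  (forall k : R, 0 < k <= 1 / 2 ->
   exists M0 : R, forall M : R, M >= M0 ->
   exists Ck T0 : R, forall T : R, T >= T0 ->
   forall J : nat, is_calJ T M J ->
   forall l : list (R * nat), zeros_list T l ->
     Cmod (zsumC l (fun r => Cmult (Cmult (zeta' r) (Nmol k T J r (k - 1)))
                                   (Nmol k T J (Cconj r) k)))
     <= Ck * rpow (zsumR l (fun r => rpow (Cmod (zeta' r)) (2 * k))) (1 / 2)
           * rpow (zsumR l (fun r => Cmod (zeta' r) ^ 2 * Cmod (Nmol k T J r (k - 1)) ^ 2))
                  ((1 - k) / 2)
           * rpow (zsumR l (fun r => prodNQ k T J r)) (k / 2))
  /\
  (forall k : R, 1 / 2 < k ->
   exists M0 : R, forall M : R, M >= M0 ->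
   exists Ck T0 : R, forall T : R, T >= T0 ->
   forall J : nat, is_calJ T M J ->
   forall l : list (R * nat), zeros_list T l ->
     Cmod (zsumC l (fun r => Cmult (Cmult (zeta' r) (Nmol k T J r (k - 1)))
                                   (Nmol k T J (Cconj r) k)))
     <= Ck * rpow (zsumR l (fun r => rpow (Cmod (zeta' r)) (2 * k))) (1 / (2 * k))
           * rpow (zsumR l (fun r => prodNQ k T J r)) ((2 * k - 1) / (2 * k))).
Proof.
  intros _. split.
  - intros k Hk. exists 20. intros M HM.
    set (E := exp ((14 + 4 / k) * (8 / k ^ 2))).
    exists (rpow E (k / 2)), (exp (exp 1)). intros T HT J HJ l _.
    destruct (setup T M J) as [Ha Hs]; try lra; auto.
    eapply Rle_trans. apply stepA.
    set (w := fun p : R * nat => INR (snd p)).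
    set (X := fun p : R * nat => Cmod (zeta' (rho (fst p)))).
    set (Aa := fun p : R * nat => Cmod (Nmol k T J (rho (fst p)) (k - 1))).
    set (Bb := fun p : R * nat => Cmod (Nmol k T J (Cconj (rho (fst p))) k)).
    set (P := fun p : R * nat => prodNQ k T J (rho (fst p))).
    assert (Hk1 : 0 < k < 1) by lra.
    rewrite (rsum_ext_in l _ (fun p => w p * (rpow (X p) k * rpow (X p * Aa p) (1 - k) * (rpow (Aa p) k * Bb p)))).
    2:{ intros p _. unfold w, X, Aa, Bb. rewrite <- fgh; auto; apply Cmod_ge_0. }
    eapply Rle_trans. apply (holder3 l w (fun p => rpow (X p) k) (fun p => rpow (X p * Aa p) (1 - k))
        (fun p => rpow (Aa p) k * Bb p) 2 (2 / (1 - k)) (2 / k)).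
    + lra.
    + apply (Rmult_lt_reg_r (1 - k)). lra. unfold Rdiv. rewrite Rmult_assoc, Rinv_l by lra. lra.
    + apply (Rmult_lt_reg_r k). lra. unfold Rdiv. rewrite Rmult_assoc, Rinv_l by lra. lra.
    + field. lra.
    + intros p _. unfold w. repeat split. apply pos_INR. apply rpow_ge0. apply rpow_ge0.
      apply Rmult_le_pos. apply rpow_ge0. apply Cmod_ge_0.
    + assert (E1 : rsum l (fun p => w p * rpow (rpow (X p) k) 2) =
                   zsumR l (fun r => rpow (Cmod (zeta' r)) (2 * k))).
      { apply rsum_ext_in. intros p _. unfold w, X. rewrite rpow_rpow by apply Cmod_ge_0.
        rewrite Rmult_comm with (r1 := k). reflexivity. }
      assert (E2 : rsum l (fun p => w p * rpow (rpow (X p * Aa p) (1 - k)) (2 / (1 - k))) =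
                   zsumR l (fun r => Cmod (zeta' r) ^ 2 * Cmod (Nmol k T J r (k - 1)) ^ 2)).
      { apply rsum_ext_in. intros p _. unfold w, X, Aa.
        assert (0 <= Cmod (zeta' (rho (fst p))) * Cmod (Nmol k T J (rho (fst p)) (k - 1)))
          by (apply Rmult_le_pos; apply Cmod_ge_0).
        rewrite rpow_rpow by auto. replace ((1 - k) * (2 / (1 - k))) with (INR 2) by (simpl; field; lra).
        rewrite rpow_pow by (auto; lia). rewrite Rpow_mult_distr. reflexivity. }
      assert (E3 : rsum l (fun p => w p * rpow (rpow (Aa p) k * Bb p) (2 / k)) <=
                   E * zsumR l (fun r => prodNQ k T J r)).
      { unfold zsumR. rewrite <- rsum_scal. apply rsum_le. intros p _. unfold w, Aa, Bb.
        rewrite rpow_mult by (apply rpow_ge0 || apply Cmod_ge_0).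
        rewrite rpow_rpow by apply Cmod_ge_0. replace (k * (2 / k)) with (INR 2) by (simpl; field; lra).
        rewrite rpow_pow by (apply Cmod_ge_0 || lia).
        replace (E * (INR (snd p) * prodNQ k T J (rho (fst p)))) with (INR (snd p) * (E * prodNQ k T J (rho (fst p)))) by ring.
        apply Rmult_le_compat_l. apply pos_INR. apply prod_le; auto. lra. lra. }
      rewrite E1, E2.
      assert (HS3 : 0 <= zsumR l (fun r => prodNQ k T J r)).
      { apply rsum_ge0. intros p _. apply Rmult_le_pos. apply pos_INR. apply prodNQ_ge0. }
      assert (HE : 0 < E) by apply exp_pos.
      assert (E4 : rpow (rsum l (fun p => w p * rpow (rpow (Aa p) k * Bb p) (2 / k))) (1 / (2 / k)) <=
                   rpow E (k / 2) * rpow (zsumR l (fun r => prodNQ k T J r)) (k / 2)).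
      { rewrite <- rpow_mult by lra. replace (1 / (2 / k)) with (k / 2) by (field; lra).
        apply rpow_le_base. split. apply rsum_ge0. intros p _. apply Rmult_le_pos. apply pos_INR. apply rpow_ge0.
        exact E3. lra. }
      replace (1 / (2 / (1 - k))) with ((1 - k) / 2) by (field; lra).
      set (a1 := rpow (zsumR l (fun r => rpow (Cmod (zeta' r)) (2 * k))) (1 / 2)) in *.
      set (a2 := rpow (zsumR l (fun r => Cmod (zeta' r) ^ 2 * Cmod (Nmol k T J r (k - 1)) ^ 2)) ((1 - k) / 2)) in *.
      assert (0 <= a1 * a2) by (apply Rmult_le_pos; apply rpow_ge0).
      replace (rpow E (k / 2) * a1 * a2 * rpow (zsumR l (fun r => prodNQ k T J r)) (k / 2)) with
        (a1 * a2 * (rpow E (k / 2) * rpow (zsumR l (fun r => prodNQ k T J r)) (k / 2))) by ring.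
      apply Rmult_le_compat_l; auto.
  - intros k Hk. exists 20. intros M HM.
    set (E := exp ((14 + 4 / k) * (8 / k ^ 2))).
    exists E, (exp (exp 1)). intros T HT J HJ l _.
    destruct (setup T M J) as [Ha Hs]; try lra; auto.
    eapply Rle_trans. apply stepA.
    set (th := (2 * k - 1) / (2 * k)).
    assert (Hth : 0 < th) by (unfold th; apply Rdiv_lt_0_compat; lra).
    eapply Rle_trans with (rsum l (fun p => INR (snd p) * (Cmod (zeta' (rho (fst p))) *
                     (E * rpow (prodNQ k T J (rho (fst p))) th)))).
    { apply rsum_le. intros p _. apply Rmult_le_compat_l. apply pos_INR. apply Rmult_le_compat_l. apply Cmod_ge_0.
      apply prod_gt; auto. lra. }
    rewrite (rsum_ext_in l _ (fun p => E * (INR (snd p) * (Cmod (zeta' (rho (fst p))) * rpow (prodNQ k T J (rho (fst p))) th)))) by (intros; ring).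
    rewrite rsum_scal. rewrite Rmult_assoc. apply Rmult_le_compat_l. left; apply exp_pos.
    eapply Rle_trans. apply (holder l (fun p => INR (snd p)) (fun p => Cmod (zeta' (rho (fst p))))
        (fun p => rpow (prodNQ k T J (rho (fst p))) th) (2 * k) (2 * k / (2 * k - 1))).
    + lra.
    + apply (Rmult_lt_reg_r (2 * k - 1)). lra. unfold Rdiv. rewrite Rmult_assoc, Rinv_l by lra. lra.
    + field. lra.
    + intros p _. repeat split. apply pos_INR. apply Cmod_ge_0. apply rpow_ge0.
    + assert (E2 : rsum l (fun p => INR (snd p) * rpow (rpow (prodNQ k T J (rho (fst p))) th) (2 * k / (2 * k - 1))) =
                   zsumR l (fun r => prodNQ k T J r)).
      { apply rsum_ext_in. intros p _. rewrite rpow_rpow by apply prodNQ_ge0.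
        replace (th * (2 * k / (2 * k - 1))) with 1 by (unfold th; field; lra). rewrite rpow_1 by apply prodNQ_ge0. reflexivity. }
      rewrite E2. replace (1 / (2 * k / (2 * k - 1))) with th by (unfold th; field; lra).
      apply Req_le. reflexivity.
Qed.
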